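(* Fix $\rho<1$. There exist constants $K,c>0$ (depending only on $\rho$) such that the following holds for all sufficiently large integers $t$. Let $n$ be an integer with $Kt/\log t\leq n\leq Kt/\log t+2$ and let $H$ be any $3$-regular graph on $n$ vertices whose transition matrix has all eigenvalues other than $1$ of absolute value at most $\rho$. Let $G_t$ be the graph obtained from the half-line $\mathbb{N}=\{0,1,2,\ldots\}$ (edges between consecutive integers) by adding a copy of $H$ and a single edge joining $0$ to some vertex of $H$ (so that $0$ has degree $2$). Then simple random walk on $G_t$ satisfies $$\mathbb{P}_0(\tau_0=t\mid\tau_0\geq t)\geq\frac{c\log t}{t}.$$
   Context: $\tau_0=\min\{s\geq1:X_s=0\}$ for simple random walk $(X_s)$ on $G_t$ started at $0$. *)

(* Defs.v *)
From Stdlib Require Import Reals List Arith.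
Import ListNotations.
Open Scope R_scope.

Definition rsum (l : list R) : R := fold_right Rplus 0 l.

Definition sum_lt (n : nat) (f : nat -> R) : R := rsum (map f (seq 0 n)).

(* A finite simple graph H on vertex set {0,..,n-1}, given by a boolean
   adjacency relation (values outside {0,..,n-1} are irrelevant). *)
Definition nbrsH (n : nat) (adj : nat -> nat -> bool) (i : nat) : list nat :=
  filter (adj i) (seq 0 n).

Definition cubic_graph (n : nat) (adj : nat -> nat -> bool) : Prop :=
  (forall i j, (i < n)%nat -> (j < n)%nat -> adj i j = adj j i) /\
  (forall i, (i < n)%nat -> adj i i = false) /\
  (forall i, (i < n)%nat -> length (nbrsH n adj i) = 3%nat).

Definition transH (adj : nat -> nat -> bool) (i j : nat) : R :=
  (if adj i j then 1 else 0) / 3.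

(* All eigenvalues of the transition matrix other than the trivial eigenvalue 1
   (counted with multiplicity) have absolute value at most rho.  Since the
   transition matrix is real symmetric with the constant vector as eigenvector
   for 1, the non-trivial eigenvalues are exactly the eigenvalues of its
   restriction to the orthogonal complement of the constant vector. *)
Definition nontrivial_spectrum_bound (n : nat) (adj : nat -> nat -> bool) (rho : R) : Prop :=
  forall (lam : R) (v : nat -> R),
    (exists i, (i < n)%nat /\ v i <> 0) ->
    sum_lt n v = 0 ->
    (forall i, (i < n)%nat -> sum_lt n (fun j => transH adj i j * v j) = lam * v i) ->
    Rabs lam <= rho.

Inductive vtx : Type := Lv (k : nat) | Hv (i : nat).

Definition nbrsG (n : nat) (adj : nat -> nat -> bool) (v0 : nat) (x : vtx) : list vtx :=
  match x with
  | Lv 0 => [Lv 1; Hv v0]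
  | Lv (S k) => [Lv k; Lv (S (S k))]
  | Hv i => map Hv (nbrsH n adj i) ++ (if Nat.eqb i v0 then [Lv 0] else [])
  end.

Definition degG n adj v0 (x : vtx) : R := INR (length (nbrsG n adj v0 x)).

(* first_hit n adj v0 s x = P_x(tau_0 = s) for simple random walk on G_t,
   where tau_0 = min{s >= 1 : X_s = 0}. *)
Fixpoint first_hit (n : nat) (adj : nat -> nat -> bool) (v0 : nat) (s : nat) (x : vtx) : R :=
  match s with
  | O => 0
  | S s' =>
      rsum (map (fun y =>
                   / degG n adj v0 x *
                   match y with
                   | Lv 0 => match s' with O => 1 | S _ => 0 end
                   | _ => first_hit n adj v0 s' y
                   end)
                (nbrsG n adj v0 x))
  end.

Definition ret_eq n adj v0 (t : nat) : R := first_hit n adj v0 t (Lv 0).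

(* P_0(tau_0 >= t) = 1 - sum_{s=1}^{t-1} P_0(tau_0 = s) *)
Definition ret_ge n adj v0 (t : nat) : R :=
  1 - rsum (map (fun s => ret_eq n adj v0 s) (seq 1 (t - 1))).

(* Main.v *)
Require Import Defs.
From Stdlib Require Import Reals List Arith Lia Lra Classical ZArith.
Import ListNotations.
From mathcomp Require ssreflect ssrfun ssrbool eqtype ssrnat seq fintype ssralg ssrnum matrix.
From mathcomp Require interval set_interval boolp classical_sets reals topology normedtype Rstruct Rstruct_topology derive.
Open Scope R_scope.

Lemma sum_lt_0 f : sum_lt 0 f = 0.
Proof. reflexivity. Qed.

Lemma sum_lt_S n f : sum_lt (S n) f = sum_lt n f + f n.
Proof.
  unfold sum_lt. rewrite seq_S, map_app. simpl.
  induction (map f (seq 0 n)) as [|a l IH]; simpl; [ring|]. rewrite IH. ring.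
Qed.

Lemma sum_lt_ext n f g : (forall i, (i < n)%nat -> f i = g i) -> sum_lt n f = sum_lt n g.
Proof.
  induction n; intros H. reflexivity.
  rewrite !sum_lt_S. rewrite IHn. rewrite H by lia. reflexivity. intros; apply H; lia.
Qed.

Lemma sum_lt_plus n f g : sum_lt n (fun i => f i + g i) = sum_lt n f + sum_lt n g.
Proof. induction n. simpl; unfold sum_lt; simpl; ring. rewrite !sum_lt_S, IHn. ring. Qed.

Lemma sum_lt_minus n f g : sum_lt n (fun i => f i - g i) = sum_lt n f - sum_lt n g.
Proof. induction n. unfold sum_lt; simpl; ring. rewrite !sum_lt_S, IHn. ring. Qed.

Lemma sum_lt_scal n c f : sum_lt n (fun i => c * f i) = c * sum_lt n f.
Proof. induction n. unfold sum_lt; simpl; ring. rewrite !sum_lt_S, IHn. ring. Qed.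

Lemma sum_lt_scalr n c f : sum_lt n (fun i => f i * c) = sum_lt n f * c.
Proof. induction n. unfold sum_lt; simpl; ring. rewrite !sum_lt_S, IHn. ring. Qed.

Lemma sum_lt_const0 n : sum_lt n (fun _ => 0) = 0.
Proof. induction n. reflexivity. rewrite sum_lt_S, IHn. ring. Qed.

Lemma sum_lt_const n c : sum_lt n (fun _ => c) = INR n * c.
Proof. induction n. unfold sum_lt; simpl; ring. rewrite sum_lt_S, IHn, S_INR. ring. Qed.

Lemma sum_lt_le n f g : (forall i, (i < n)%nat -> f i <= g i) -> sum_lt n f <= sum_lt n g.
Proof.
  induction n; intros H. unfold sum_lt; simpl; lra.
  rewrite !sum_lt_S. assert (f n <= g n) by (apply H; lia).
  assert (sum_lt n f <= sum_lt n g) by (apply IHn; intros; apply H; lia). lra.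
Qed.

Lemma sum_lt_nonneg n f : (forall i, (i < n)%nat -> 0 <= f i) -> 0 <= sum_lt n f.
Proof. intros H. rewrite <- (sum_lt_const0 n). apply sum_lt_le. auto. Qed.

Lemma sum_lt_term n f j : (forall i, (i < n)%nat -> 0 <= f i) -> (j < n)%nat -> f j <= sum_lt n f.
Proof.
  induction n; intros H Hj. lia.
  rewrite sum_lt_S. destruct (Nat.eq_dec j n).
  - subst. assert (0 <= sum_lt n f) by (apply sum_lt_nonneg; intros; apply H; lia). lra.
  - assert (f j <= sum_lt n f) by (apply IHn; [intros; apply H; lia | lia]).
    assert (0 <= f n) by (apply H; lia). lra.
Qed.

Lemma sum_lt_swap n m (F : nat -> nat -> R) :
  sum_lt n (fun i => sum_lt m (fun j => F i j)) = sum_lt m (fun j => sum_lt n (fun i => F i j)).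
Proof.
  induction n. rewrite sum_lt_0. symmetry. apply sum_lt_const0.
  rewrite sum_lt_S, IHn, <- sum_lt_plus. apply sum_lt_ext. intros. rewrite sum_lt_S. reflexivity.
Qed.

Lemma sum_lt_single n f j : (j < n)%nat -> sum_lt n (fun i => if Nat.eqb i j then f i else 0) = f j.
Proof.
  induction n; intros Hj. lia.
  rewrite sum_lt_S. destruct (Nat.eq_dec j n).
  - subst. rewrite Nat.eqb_refl. rewrite (sum_lt_ext n _ (fun _ => 0)). rewrite sum_lt_const0. ring.
    intros i Hi. destruct (Nat.eqb_spec i n); [lia|reflexivity].
  - rewrite IHn by lia. destruct (Nat.eqb_spec n j); [lia|ring].
Qed.

Lemma rsum_app l1 l2 : rsum (l1 ++ l2) = rsum l1 + rsum l2.
Proof. induction l1; simpl. unfold rsum; simpl; ring. unfold rsum in *; simpl. rewrite IHl1. ring. Qed.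

Lemma rsum_filter_seq (p : nat -> bool) (f : nat -> R) a n :
  rsum (map f (filter p (seq a n))) = rsum (map (fun i => if p i then f i else 0) (seq a n)).
Proof.
  revert a. induction n; intros a. reflexivity.
  simpl. destruct (p a); simpl; unfold rsum in *; simpl; rewrite IHn; ring.
Qed.

Lemma rsum_filter (p : nat -> bool) (f : nat -> R) n :
  rsum (map f (filter p (seq 0 n))) = sum_lt n (fun i => if p i then f i else 0).
Proof. apply rsum_filter_seq. Qed.

Lemma rsum_map_scal c (f : nat -> R) l : rsum (map (fun y => c * f y) l) = c * rsum (map f l).
Proof. induction l; unfold rsum in *; simpl. ring. rewrite IHl. ring. Qed.

Lemma sum_lt_amgm n f g : 2 * sum_lt n (fun i => f i * g i) <= sum_lt n (fun i => f i * f i) + sum_lt n (fun i => g i * g i).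
Proof.
  rewrite <- sum_lt_plus, <- sum_lt_scal. apply sum_lt_le. intros i _.
  assert (0 <= (f i - g i) * (f i - g i)) by apply Rle_0_sqr. lra.
Qed.

Definition qf n (A : nat -> nat -> R) (u : nat -> R) :=
  sum_lt n (fun i => sum_lt n (fun j => A i j * u i * u j)).

Module MaxM.
Import ssreflect ssrfun ssrbool eqtype ssrnat seq fintype ssralg ssrnum matrix.
Import interval set_interval boolp classical_sets reals topology normedtype Rstruct Rstruct_topology derive.
Import GRing.Theory Num.Theory.
Local Open Scope classical_set_scope.

Definition vec n (V : 'rV[R]_n) (i : nat) : R :=
  match (insub i : option 'I_n) with Some j => V ord0 j | None => 0%R end.

Arguments vec {n} V i.
Lemma cvec n i : continuous (fun V : 'rV[R]_n => vec V i).
Proof.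
  rewrite /vec. case: insubP => [j _ _|_].
  - exact: coord_continuous.
  - exact: cst_continuous.
Qed.

Lemma crsum n T (f : T -> 'rV[R]_n -> R) (l : list T) :
  (forall i, continuous (f i)) -> continuous (fun V => rsum (List.map (fun i => f i V) l)).
Proof.
  move=> H; elim: l => [|a l IH] /=.
  - exact: cst_continuous.
  - move=> x. have H1 := @continuousD R R^o _ (f a) (fun V => rsum (List.map (fun i => f i V) l)) x (H a x) (IH x).
    exact: H1.
Qed.

Lemma csum n m (f : nat -> 'rV[R]_n -> R) :
  (forall i, continuous (f i)) -> continuous (fun V => sum_lt m (fun i => f i V)).
Proof. move=> H; rewrite /sum_lt. exact: crsum. Qed.

Lemma cmul n (f g : 'rV[R]_n -> R) : continuous f -> continuous g -> continuous (fun V => f V * g V).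
Proof. move=> Hf Hg x. exact: (@continuousM R _ f g x (Hf x) (Hg x)). Qed.

Lemma ccst n (c : R) : continuous (fun V : 'rV[R]_n => c).
Proof. exact: cst_continuous. Qed.


Lemma vecrowE n (u : nat -> R) i : (i < n)%coq_nat -> vec (\row_(j < n) u j)%R i = u i.
Proof.
  move=> Hi. rewrite /vec. case: insubP => [j _ hj|hn].
  - by rewrite mxE hj.
  - exfalso. move/negP: hn. apply. by apply/ltP.
Qed.

Lemma vecE n (V : 'rV[R]_n) (i : 'I_n) : vec V i = V ord0 i.
Proof. by rewrite /vec valK. Qed.

Lemma quad_max_mc n (A : nat -> nat -> R) (w c : nat -> R) :
  (forall i, (i < n)%coq_nat -> Rle 1 (w i)) ->
  (exists v, and (sum_lt n (fun i => Rmult (w i) (Rmult (v i) (v i))) = R1) (sum_lt n (fun i => Rmult (c i) (v i)) = R0)) ->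
  exists v, and (sum_lt n (fun i => Rmult (w i) (Rmult (v i) (v i))) = R1) (and (sum_lt n (fun i => Rmult (c i) (v i)) = R0) (
   forall u, sum_lt n (fun i => Rmult (w i) (Rmult (u i) (u i))) = R1 -> sum_lt n (fun i => Rmult (c i) (u i)) = R0 ->
     Rle (qf n A u) (qf n A v))).
Proof.
  move=> Hw [v0 [Hv1 Hv2]].
  pose F2 := fun V : 'rV[R]_n => sum_lt n (fun i => w i * (vec V i * vec V i)).
  pose F3 := fun V : 'rV[R]_n => sum_lt n (fun i => c i * vec V i).
  pose F1 := fun V : 'rV[R]_n => qf n A (vec V).
  have cF2 : continuous F2.
    apply: csum => i; apply: cmul; [exact: ccst| apply: cmul; exact: cvec].
  have cF3 : continuous F3.
    apply: csum => i; apply: cmul; [exact: ccst| exact: cvec].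
  have cF1 : continuous F1.
    apply: csum => i; apply: csum => j; apply: cmul; last exact: cvec.
    apply: cmul; [exact: ccst| exact: cvec].
  pose S := [set V : 'rV[R]_n | F2 V = 1 /\ F3 V = 0].
  have clS : closed S.
    have -> : S = (F2 @^-1` [set x | x = 1]) `&` (F3 @^-1` [set x | x = 0]).
      by apply/seteqP; split => V /=.
    apply: closedI; apply: preimage_closed; try exact: closed_eq.
    - by move=> x _; apply: cF2.
    - by move=> x _; apply: cF3.
  pose B := [set V : 'rV[R]_n | forall i, (`[(-1)%R, 1%R])%classic (V ord0 i)].
  have cB : compact B.
    have := (@rV_compact R n (fun=> (`[(-1)%R, 1%R])%classic)). apply. move=> _.
    exact: segment_compact.
  have SB : S `<=` B.
    move=> V [H2 _] i /=. rewrite in_itv /=.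
    have Ht : Rle (w i * (vec V i * vec V i)) 1.
      rewrite -H2. apply: (sum_lt_term n (fun i => w i * (vec V i * vec V i))).
      + move=> k Hk. apply: Rmult_le_pos. have := Hw k Hk. lra. apply: Rle_0_sqr.
      + apply/ltP. exact: ltn_ord.
    have Hwi : Rle 1 (w i) by apply: Hw; apply/ltP; exact: ltn_ord.
    have Hsq : Rle (vec V i * vec V i) 1.
      have := Rle_0_sqr (vec V i). rewrite /Rsqr. nra.
    rewrite vecE in Hsq. apply/andP; split; apply/RleP.
    + change (Rle (-1) (V ord0 i)). have := Rle_0_sqr (V ord0 i). rewrite /Rsqr. nra.
    + change (Rle (V ord0 i) 1). have := Rle_0_sqr (V ord0 i). rewrite /Rsqr. nra.
  have cS : compact S by apply: (subclosed_compact clS cB SB).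
  have neS : S !=set0.
    exists (\row_(j < n) v0 j)%R. rewrite /S /F2 /F3 /=. split.
    - etransitivity; last exact: Hv1. apply: sum_lt_ext => i Hi. by rewrite vecrowE.
    - etransitivity; last exact: Hv2. apply: sum_lt_ext => i Hi. by rewrite vecrowE.
  have cw : {within S, continuous F1} by apply: continuous_subspaceT.
  have [V VS Vmax] := compact_EVT_max neS cS cw.
  move: VS; rewrite inE => -[HV2 HV3].
  exists (vec V). split; [exact: HV2| split; [exact: HV3|]].
  move=> u Hu2 Hu3.
  have Hin : (\row_(j < n) u j)%R \in S.
    rewrite inE /S /F2 /F3 /=. split.
    - etransitivity; last exact: Hu2. apply: sum_lt_ext => i Hi. by rewrite vecrowE.
    - etransitivity; last exact: Hu3. apply: sum_lt_ext => i Hi. by rewrite vecrowE.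
  have := Vmax _ Hin. move/RleP. rewrite /F1.
  have -> : qf n A (vec (\row_(j < n) u j)%R) = qf n A u.
    apply: sum_lt_ext => i Hi. apply: sum_lt_ext => j Hj. by rewrite !vecrowE.
  done.
Qed.

End MaxM.

Lemma quad_max n (A : nat -> nat -> R) (w c : nat -> R) :
  (forall i, (i < n)%nat -> 1 <= w i) ->
  (exists v, sum_lt n (fun i => w i * (v i * v i)) = 1 /\ sum_lt n (fun i => c i * v i) = 0) ->
  exists v, sum_lt n (fun i => w i * (v i * v i)) = 1 /\ sum_lt n (fun i => c i * v i) = 0 /\
   forall u, sum_lt n (fun i => w i * (u i * u i)) = 1 -> sum_lt n (fun i => c i * u i) = 0 ->
     qf n A u <= qf n A v.
Proof. exact (MaxM.quad_max_mc n A w c). Qed.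


Definition Aop n (A : nat -> nat -> R) (u : nat -> R) (x : nat) := sum_lt n (fun y => A x y * u y).
Definition Bf n (A : nat -> nat -> R) (a b : nat -> R) := sum_lt n (fun x => a x * Aop n A b x).

Lemma sum_sq_zero n f : sum_lt n (fun i => f i * f i) = 0 -> forall i, (i < n)%nat -> f i = 0.
Proof.
  intros H i Hi. assert (f i * f i <= sum_lt n (fun i => f i * f i)).
  { apply (sum_lt_term n (fun i => f i * f i)); auto. intros; apply Rle_0_sqr. }
  assert (0 <= f i * f i) by apply Rle_0_sqr. nra.
Qed.

Lemma sum_wsq_zero n w f : (forall i, (i < n)%nat -> 0 < w i) ->
  sum_lt n (fun i => w i * (f i * f i)) = 0 -> forall i, (i < n)%nat -> f i = 0.
Proof.
  intros Hw H i Hi. assert (w i * (f i * f i) <= sum_lt n (fun i => w i * (f i * f i))).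
  { apply (sum_lt_term n (fun i => w i * (f i * f i))); auto. intros k Hk.
    apply Rmult_le_pos; [apply Rlt_le, Hw; auto|apply Rle_0_sqr]. }
  assert (0 <= f i * f i) by apply Rle_0_sqr. specialize (Hw i Hi).
  assert (f i * f i <= 0).
  { apply (Rmult_le_reg_l (w i)); auto. rewrite H in H0. lra. }
  nra.
Qed.

Lemma quad_zero a b : (forall e, e * a + e * e * b <= 0) -> a = 0.
Proof.
  intros H. set (d := Rabs b + 1). assert (Hd : 0 < d) by (unfold d; pose proof (Rabs_pos b); lra).
  specialize (H (a / d)). assert (Hb : - b <= Rabs b) by (rewrite <- Rabs_Ropp; apply RRle_abs).
  assert (H2 : a * a * (d + b) <= 0).
  { assert (Hx : (a / d * a + a / d * (a / d) * b) * (d * d) <= 0).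
    { assert (0 <= d * d) by nra. nra. }
    replace ((a / d * a + a / d * (a / d) * b) * (d * d)) with (a * a * (d + b)) in Hx by (field; lra). exact Hx. }
  assert (d + b >= 1) by (unfold d; lra). nra.
Qed.

Section QuadS.
Variable n : nat.
Variable A : nat -> nat -> R.
Hypothesis Asym : forall i j, (i < n)%nat -> (j < n)%nat -> A i j = A j i.

Lemma qf_Bf u : qf n A u = Bf n A u u.
Proof.
  unfold qf, Bf, Aop. apply sum_lt_ext; intros i Hi. rewrite <- sum_lt_scal.
  apply sum_lt_ext; intros; ring.
Qed.

Lemma Bf_sym a b : Bf n A a b = Bf n A b a.
Proof.
  unfold Bf, Aop. rewrite (sum_lt_ext n (fun x => a x * _) (fun x => sum_lt n (fun y => a x * A x y * b y))).
  2:{ intros; rewrite <- sum_lt_scal; apply sum_lt_ext; intros; ring. }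
  rewrite sum_lt_swap. apply sum_lt_ext; intros y Hy. rewrite <- sum_lt_scal.
  apply sum_lt_ext; intros x Hx. rewrite Asym by auto. ring.
Qed.

Lemma Aop_lin k a b x : Aop n A (fun i => a i + k * b i) x = Aop n A a x + k * Aop n A b x.
Proof. unfold Aop. rewrite <- sum_lt_scal, <- sum_lt_plus. apply sum_lt_ext; intros; ring. Qed.

Lemma Bf_linl k a b c : Bf n A (fun i => a i + k * b i) c = Bf n A a c + k * Bf n A b c.
Proof. unfold Bf. rewrite <- sum_lt_scal, <- sum_lt_plus. apply sum_lt_ext; intros; ring. Qed.

Lemma Bf_linr k a b c : Bf n A c (fun i => a i + k * b i) = Bf n A c a + k * Bf n A c b.
Proof. rewrite Bf_sym, Bf_linl, (Bf_sym a), (Bf_sym b). reflexivity. Qed.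

Lemma Bf_ext a a' b b' : (forall i, (i < n)%nat -> a i = a' i) -> (forall i, (i < n)%nat -> b i = b' i) ->
  Bf n A a b = Bf n A a' b'.
Proof.
  intros Ha Hb. unfold Bf, Aop. apply sum_lt_ext; intros i Hi. rewrite Ha by auto. f_equal.
  apply sum_lt_ext; intros j Hj. rewrite Hb by auto. reflexivity.
Qed.

Lemma max_eigen (w c v : nat -> R) (mu : R) :
  (forall u, sum_lt n (fun i => c i * u i) = 0 -> Bf n A u u <= mu * sum_lt n (fun i => w i * (u i * u i))) ->
  Bf n A v v = mu * sum_lt n (fun i => w i * (v i * v i)) ->
  sum_lt n (fun i => c i * v i) = 0 ->
  forall h, sum_lt n (fun i => c i * h i) = 0 ->
    Bf n A v h = mu * sum_lt n (fun i => w i * (v i * h i)).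
Proof.
  intros Hmax Hv Hc h Hh.
  assert (Hq : forall e, e * (2 * (Bf n A v h - mu * sum_lt n (fun i => w i * (v i * h i)))) +
       e * e * (Bf n A h h - mu * sum_lt n (fun i => w i * (h i * h i))) <= 0).
  { intros e. specialize (Hmax (fun i => v i + e * h i)).
    assert (Hc' : sum_lt n (fun i => c i * (v i + e * h i)) = 0).
    { rewrite (sum_lt_ext n _ (fun i => c i * v i + e * (c i * h i))) by (intros; ring).
      rewrite sum_lt_plus, sum_lt_scal, Hc, Hh. ring. }
    specialize (Hmax Hc'). rewrite Bf_linl, !Bf_linr in Hmax.
    rewrite (Bf_sym h v) in Hmax.
    rewrite (sum_lt_ext n _ (fun i => w i * (v i * v i) + (2 * e) * (w i * (v i * h i)) + (e * e) * (w i * (h i * h i)))) in Hmax by (intros; ring).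
    rewrite !sum_lt_plus, !sum_lt_scal in Hmax. rewrite Hv in Hmax. lra. }
  pose proof (quad_zero _ _ Hq). lra.
Qed.

Lemma max_homog (w c v : nat -> R) :
  (forall i, (i < n)%nat -> 1 <= w i) ->
  (forall u, sum_lt n (fun i => w i * (u i * u i)) = 1 -> sum_lt n (fun i => c i * u i) = 0 -> qf n A u <= qf n A v) ->
  forall u, sum_lt n (fun i => c i * u i) = 0 -> Bf n A u u <= qf n A v * sum_lt n (fun i => w i * (u i * u i)).
Proof.
  intros Hw Hmax u Hu. set (N := sum_lt n (fun i => w i * (u i * u i))).
  assert (HN : 0 <= N).
  { apply sum_lt_nonneg; intros i Hi. apply Rmult_le_pos; [specialize (Hw i Hi); lra|apply Rle_0_sqr]. }
  destruct (Req_dec N 0) as [H0|H0].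
  - assert (Hz : forall i, (i < n)%nat -> u i = 0).
    { apply (sum_wsq_zero n w); auto. intros i Hi; specialize (Hw i Hi); lra. }
    rewrite (Bf_ext u (fun _ => 0) u (fun _ => 0)) by auto. unfold Bf.
    rewrite (sum_lt_ext n _ (fun _ => 0)) by (intros; ring). rewrite sum_lt_const0, H0. lra.
  - assert (HNp : 0 < N) by lra. set (s := sqrt N).
    assert (Hs : 0 < s) by (apply sqrt_lt_R0; auto).
    assert (Hss : s * s = N) by (apply sqrt_sqrt; lra).
    specialize (Hmax (fun i => u i / s)).
    assert (H1 : sum_lt n (fun i => w i * (u i / s * (u i / s))) = 1).
    { rewrite (sum_lt_ext n _ (fun i => / (s * s) * (w i * (u i * u i)))) by (intros; field; lra).
      rewrite sum_lt_scal. fold N. rewrite Hss. field. lra. }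
    assert (H2 : sum_lt n (fun i => c i * (u i / s)) = 0).
    { rewrite (sum_lt_ext n _ (fun i => / s * (c i * u i))) by (intros; field; lra).
      rewrite sum_lt_scal, Hu. ring. }
    specialize (Hmax H1 H2). rewrite qf_Bf in Hmax.
    rewrite (Bf_ext (fun i => u i / s) (fun i => 0 + / s * u i) (fun i => u i / s) (fun i => 0 + / s * u i)) in Hmax
      by (intros; field; lra).
    rewrite Bf_linl, !Bf_linr in Hmax.
    assert (Hz : forall a, Bf n A (fun _ => 0) a = 0).
    { intros a. unfold Bf. rewrite (sum_lt_ext n _ (fun _ => 0)) by (intros; ring). apply sum_lt_const0. }
    rewrite !Hz, (Bf_sym _ (fun _ => 0)), Hz in Hmax.
    assert (Hm : Bf n A u u <= qf n A v * (s * s)).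
    { apply (Rmult_le_reg_l (/ (s * s))). apply Rinv_0_lt_compat; nra.
      replace (/ (s * s) * (qf n A v * (s * s))) with (qf n A v) by (field; lra). replace (0 + / s * 0 + / s * (0 + / s * Bf n A u u)) with (/ (s * s) * Bf n A u u) in Hmax by (field; lra). exact Hmax. }
    rewrite Hss in Hm. exact Hm.
Qed.

End QuadS.

Lemma S1_gen n (A : nat -> nat -> R) (d b : R) :
  (forall i j, (i < n)%nat -> (j < n)%nat -> A i j = A j i) ->
  (forall x, (x < n)%nat -> sum_lt n (fun y => A x y) = d) ->
  (forall mu v, (exists i, (i < n)%nat /\ v i <> 0) -> sum_lt n v = 0 ->
      (forall i, (i < n)%nat -> Aop n A v i = mu * v i) -> mu <= b) ->
  forall u, sum_lt n u = 0 -> Bf n A u u <= b * sum_lt n (fun i => u i * u i).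
Proof.
  intros Asym Hrow Heig u Hu.
  set (N := sum_lt n (fun i => u i * u i)).
  assert (HN : 0 <= N) by (apply sum_lt_nonneg; intros; apply Rle_0_sqr).
  destruct (Req_dec N 0) as [H0|H0].
  - assert (Hz : forall i, (i < n)%nat -> u i = 0) by (apply sum_sq_zero; auto).
    rewrite (Bf_ext n A u (fun _ => 0) u (fun _ => 0)) by auto. unfold Bf.
    rewrite (sum_lt_ext n _ (fun _ => 0)) by (intros; ring). rewrite sum_lt_const0. fold N. rewrite H0. lra.
  - assert (HNp : 0 < N) by lra. set (s := sqrt N).
    assert (Hs : 0 < s) by (apply sqrt_lt_R0; auto).
    assert (Hss : s * s = N) by (apply sqrt_sqrt; lra).
    destruct (quad_max n A (fun _ => 1) (fun _ => 1)) as [v [Hv1 [Hv2 Hvmax]]].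
    { intros; lra. }
    { exists (fun i => u i / s). split.
      - rewrite (sum_lt_ext n _ (fun i => / (s * s) * (u i * u i))) by (intros; field; lra).
        rewrite sum_lt_scal. fold N. rewrite Hss. field. lra.
      - rewrite (sum_lt_ext n _ (fun i => / s * u i)) by (intros; field; lra).
        rewrite sum_lt_scal, Hu. ring. }
    set (mu := qf n A v).
    assert (Hhom := max_homog n A Asym (fun _ => 1) (fun _ => 1) v ltac:(intros; lra) Hvmax).
    assert (Hvv : Bf n A v v = mu * sum_lt n (fun i => 1 * (v i * v i))).
    { rewrite Hv1. unfold mu. rewrite qf_Bf. ring. }
    assert (Hfv := max_eigen n A Asym (fun _ => 1) (fun _ => 1) v mu Hhom Hvv Hv2).
    set (r := fun y => Aop n A v y - mu * v y).
    assert (Hsv : sum_lt n v = 0).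
    { rewrite <- Hv2. apply sum_lt_ext; intros; ring. }
    assert (Hr : sum_lt n (fun i => 1 * r i) = 0).
    { unfold r. rewrite (sum_lt_ext n _ (fun i => Aop n A v i - mu * v i)) by (intros; ring).
      rewrite sum_lt_minus, sum_lt_scal, Hsv. unfold Aop. rewrite sum_lt_swap.
      rewrite (sum_lt_ext n _ (fun y => d * v y)).
      - rewrite sum_lt_scal, Hsv. ring.
      - intros y Hy. rewrite <- (Hrow y Hy). rewrite <- sum_lt_scalr. apply sum_lt_ext; intros.
        rewrite Asym by auto. ring. }
    specialize (Hfv r Hr).
    assert (Hrr : sum_lt n (fun i => r i * r i) = 0).
    { rewrite (Bf_sym n A Asym) in Hfv. unfold Bf in Hfv.
      assert (E : sum_lt n (fun i => r i * r i) = sum_lt n (fun x => r x * Aop n A v x) - mu * sum_lt n (fun i => 1 * (v i * r i))).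
      { rewrite <- sum_lt_scal, <- sum_lt_minus. apply sum_lt_ext; intros. unfold r. ring. }
      rewrite E, Hfv. ring. }
    assert (Hr0 := sum_sq_zero n r Hrr).
    assert (Hmu : mu <= b).
    { apply (Heig mu v); auto.
      - destruct (classic (exists i, (i < n)%nat /\ v i <> 0)) as [E|E]; auto.
        exfalso. assert (Hz : sum_lt n (fun i => 1 * (v i * v i)) = 0).
        { rewrite (sum_lt_ext n _ (fun _ => 0)). apply sum_lt_const0. intros i Hi.
          destruct (Req_dec (v i) 0) as [Z|Z]. rewrite Z; ring. exfalso; apply E; eauto. }
        lra.
      - intros i Hi. specialize (Hr0 i Hi). unfold r in Hr0. lra. }
    specialize (Hhom u). cbv beta in Hhom. rewrite (sum_lt_ext n (fun i => 1 * u i) u) in Hhom by (intros; ring).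
    specialize (Hhom Hu). fold mu in Hhom.
    rewrite (sum_lt_ext n (fun i => 1 * (u i * u i)) (fun i => u i * u i)) in Hhom by (intros; ring).
    fold N in Hhom |- *. nra.
Qed.

Definition adjR (adj : nat -> nat -> bool) i j : R := if adj i j then 1 else 0.
Definition piw (v0 : nat) (x : nat) : R := if Nat.eqb x v0 then 4 else 3.
Definition ev (v0 : nat) (x : nat) : R := if Nat.eqb x v0 then 1 else 0.
Definition Qop n adj v0 (z : nat -> R) (x : nat) : R := Aop n (adjR adj) z x / piw v0 x.
Fixpoint Qp n adj v0 (m : nat) (z : nat -> R) : nat -> R :=
  match m with O => z | S m' => Qop n adj v0 (Qp n adj v0 m' z) end.
Definition ip n v0 (a b : nat -> R) := sum_lt n (fun x => piw v0 x * a x * b x).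

Lemma piw_pos v0 x : 3 <= piw v0 x.
Proof. unfold piw; destruct (Nat.eqb x v0); lra. Qed.

Lemma adjR_nonneg adj i j : 0 <= adjR adj i j.
Proof. unfold adjR; destruct (adj i j); lra. Qed.

Section G.
Variables (n : nat) (adj : nat -> nat -> bool) (v0 : nat) (rho : R).
Hypothesis Hsym : forall i j, (i < n)%nat -> (j < n)%nat -> adj i j = adj j i.
Hypothesis Hdeg : forall i, (i < n)%nat -> sum_lt n (fun j => adjR adj i j) = 3.
Hypothesis Hv0 : (v0 < n)%nat.
Hypothesis Hrho : 1/2 <= rho < 1.
Hypothesis Hspec : nontrivial_spectrum_bound n adj rho.

Notation AA := (adjR adj).
Notation B := (Bf n AA).
Notation Q := (Qop n adj v0).
Notation ipp := (ip n v0).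
Notation pw := (piw v0).

Lemma AAsym : forall i j, (i < n)%nat -> (j < n)%nat -> AA i j = AA j i.
Proof. intros; unfold adjR; rewrite Hsym; auto. Qed.

Lemma colsum y : (y < n)%nat -> sum_lt n (fun x => AA x y) = 3.
Proof. intros Hy. rewrite <- (Hdeg y Hy). apply sum_lt_ext; intros. apply AAsym; auto. Qed.

Lemma eig_transH mu v : (forall i, (i < n)%nat -> Aop n AA v i = mu * v i) ->
  forall i, (i < n)%nat -> sum_lt n (fun j => transH adj i j * v j) = (mu / 3) * v i.
Proof.
  intros H i Hi.
  replace (mu / 3 * v i) with ((mu * v i) / 3) by (field).
  rewrite <- H by auto. unfold Aop, transH, adjR, Rdiv. rewrite <- sum_lt_scalr.
  apply sum_lt_ext; intros. unfold Rdiv. ring.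
Qed.

Lemma S1_up u : sum_lt n u = 0 -> B u u <= 3 * rho * sum_lt n (fun i => u i * u i).
Proof.
  apply (S1_gen n AA 3). apply AAsym. apply Hdeg.
  intros mu v Hnz Hs Hei. assert (Ht := eig_transH mu v Hei).
  specialize (Hspec (mu / 3) v Hnz Hs Ht). pose proof (Rle_abs (mu/3)). lra.
Qed.

Lemma S1_lo u : sum_lt n u = 0 -> - (3 * rho * sum_lt n (fun i => u i * u i)) <= B u u.
Proof.
  intros Hu.
  assert (H := S1_gen n (fun i j => - AA i j) (-3) (3 * rho)).
  assert (E : forall a b, Bf n (fun i j => - AA i j) a b = - B a b).
  { intros a b. unfold Bf, Aop.
    transitivity (sum_lt n (fun x => -1 * (a x * sum_lt n (fun y => AA x y * b y)))).
    - apply sum_lt_ext; intros x Hx.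
      assert (I1 : sum_lt n (fun y => - AA x y * b y) = -1 * sum_lt n (fun y => AA x y * b y)).
      { rewrite <- sum_lt_scal; apply sum_lt_ext; intros; ring. }
      rewrite I1. ring.
    - rewrite sum_lt_scal; ring. }
  cut (- B u u <= 3 * rho * sum_lt n (fun i => u i * u i)). lra.
  rewrite <- E. apply H; auto.
  - intros; f_equal; apply AAsym; auto.
  - intros x Hx. transitivity (-1 * sum_lt n (fun y => AA x y)).
    + rewrite <- sum_lt_scal; apply sum_lt_ext; intros; ring.
    + rewrite Hdeg; auto; ring.
  - intros mu v Hnz Hs Hei.
    assert (Hei' : forall i, (i < n)%nat -> Aop n AA v i = (- mu) * v i).
    { intros i Hi. specialize (Hei i Hi). unfold Aop in *.
      transitivity (-1 * sum_lt n (fun y => - AA i y * v y)).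
      + rewrite <- sum_lt_scal; apply sum_lt_ext; intros; ring.
      + rewrite Hei. ring. }
    assert (Ht := eig_transH (-mu) v Hei').
    specialize (Hspec (- mu / 3) v Hnz Hs Ht).
    replace (- mu / 3) with (- (mu / 3)) in Hspec by field. rewrite Rabs_Ropp in Hspec.
    pose proof (Rle_abs (mu/3)). lra.
Qed.


Lemma Aop_ext a b x : (forall y, (y < n)%nat -> a y = b y) -> Aop n AA a x = Aop n AA b x.
Proof. intros H; unfold Aop; apply sum_lt_ext; intros y Hy; rewrite H; auto. Qed.

Lemma Aop_const c x : (x < n)%nat -> Aop n AA (fun _ => c) x = 3 * c.
Proof. intros Hx. unfold Aop. rewrite sum_lt_scalr, Hdeg; auto. Qed.

Lemma Bf_expand a b : B a b = sum_lt n (fun x => sum_lt n (fun y => AA x y * a x * b y)).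
Proof. unfold Bf, Aop. apply sum_lt_ext; intros. rewrite <- sum_lt_scal. apply sum_lt_ext; intros; ring. Qed.

Lemma B_upper u : B u u <= 3 * sum_lt n (fun i => u i * u i).
Proof.
  rewrite Bf_expand.
  assert (H1 : 2 * sum_lt n (fun x => sum_lt n (fun y => AA x y * u x * u y)) <=
     sum_lt n (fun x => sum_lt n (fun y => AA x y * (u x * u x))) + sum_lt n (fun x => sum_lt n (fun y => AA x y * (u y * u y)))).
  { rewrite <- sum_lt_plus, <- sum_lt_scal. apply sum_lt_le; intros x Hx.
    rewrite <- sum_lt_plus, <- sum_lt_scal. apply sum_lt_le; intros y Hy.
    pose proof (adjR_nonneg adj x y). assert (0 <= (u x - u y) * (u x - u y)) by apply Rle_0_sqr. nra. }
  assert (H2 : sum_lt n (fun x => sum_lt n (fun y => AA x y * (u x * u x))) = 3 * sum_lt n (fun i => u i * u i)).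
  { rewrite <- sum_lt_scal. apply sum_lt_ext; intros x Hx. rewrite sum_lt_scalr, Hdeg; auto. }
  assert (H3 : sum_lt n (fun x => sum_lt n (fun y => AA x y * (u y * u y))) = 3 * sum_lt n (fun i => u i * u i)).
  { rewrite sum_lt_swap, <- sum_lt_scal. apply sum_lt_ext; intros y Hy. rewrite sum_lt_scalr, colsum; auto. }
  lra.
Qed.

Lemma B_zero_r a : B a (fun _ => 0) = 0.
Proof. unfold Bf, Aop. rewrite (sum_lt_ext n _ (fun _ => 0)). apply sum_lt_const0.
  intros. rewrite (sum_lt_ext n _ (fun _ => 0)). rewrite sum_lt_const0. ring. intros; ring. Qed.

Lemma B_one_r a : B a (fun _ => 1) = 3 * sum_lt n a.
Proof. unfold Bf. rewrite <- sum_lt_scal. apply sum_lt_ext; intros. rewrite Aop_const; auto. ring. Qed.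

Lemma B_lower u : (0 < n)%nat -> - (3 * rho * sum_lt n (fun i => u i * u i)) <= B u u.
Proof.
  intros Hn. set (s := sum_lt n u / INR n). set (w := fun i => u i - s).
  assert (HnR : 0 < INR n) by (apply lt_0_INR; auto).
  assert (Hw : sum_lt n w = 0).
  { unfold w. rewrite sum_lt_minus, sum_lt_const. unfold s. field. lra. }
  assert (Eu : B u u = B (fun i => w i + s * 1) (fun i => w i + s * 1)).
  { apply Bf_ext; intros; unfold w; ring. }
  rewrite Bf_linl, !(Bf_linr n AA AAsym) in Eu. rewrite !(Bf_sym n AA AAsym (fun _ => 1) w) in Eu.
  rewrite !B_one_r, Hw in Eu.
  assert (E1 : sum_lt n (fun i => u i * u i) = sum_lt n (fun i => w i * w i) + INR n * (s * s)).
  { rewrite <- sum_lt_const, <- sum_lt_plus.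
    transitivity (sum_lt n (fun i => w i * w i + 2 * s * w i + s * s)).
    - apply sum_lt_ext; intros; unfold w; ring.
    - rewrite !sum_lt_plus, sum_lt_scal, Hw, sum_lt_const. ring. }
  assert (H1 := S1_lo w Hw).
  assert (0 <= INR n * (s * s)) by (apply Rmult_le_pos; [lra|apply Rle_0_sqr]).
  assert (3 * sum_lt n (fun _ => 1) >= 0) by (rewrite sum_lt_const; lra).
  assert (0 <= s * s) by apply Rle_0_sqr.
  rewrite sum_lt_const in Eu. nra.
Qed.

Lemma ipp_Q a b : ipp a (Q b) = B a b.
Proof. unfold ip, Bf, Qop. apply sum_lt_ext; intros x Hx. pose proof (piw_pos v0 x). field. lra. Qed.

Lemma ipp_sym a b : ipp a b = ipp b a.
Proof. unfold ip. apply sum_lt_ext; intros; ring. Qed.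

Lemma ipp_linl k a b c : ipp (fun i => a i + k * b i) c = ipp a c + k * ipp b c.
Proof. unfold ip. rewrite <- sum_lt_scal, <- sum_lt_plus. apply sum_lt_ext; intros; ring. Qed.

Lemma ipp_linr k a b c : ipp c (fun i => a i + k * b i) = ipp c a + k * ipp c b.
Proof. rewrite ipp_sym, ipp_linl, (ipp_sym a), (ipp_sym b). reflexivity. Qed.

Lemma ipp_ext a a' b b' : (forall i, (i < n)%nat -> a i = a' i) -> (forall i, (i < n)%nat -> b i = b' i) ->
  ipp a b = ipp a' b'.
Proof. intros Ha Hb. unfold ip. apply sum_lt_ext; intros. rewrite Ha, Hb; auto. Qed.

Lemma ipp_nonneg a : 0 <= ipp a a.
Proof. unfold ip. apply sum_lt_nonneg; intros. pose proof (piw_pos v0 i).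
  assert (0 <= a i * a i) by apply Rle_0_sqr. nra. Qed.

Lemma ipp_amgm a b : 2 * ipp a b <= ipp a a + ipp b b.
Proof. unfold ip. rewrite <- sum_lt_plus, <- sum_lt_scal. apply sum_lt_le; intros.
  pose proof (piw_pos v0 i). assert (0 <= (a i - b i) * (a i - b i)) by apply Rle_0_sqr. nra. Qed.

Lemma ipp_ev z : ipp (ev v0) z = 4 * z v0.
Proof.
  unfold ip. rewrite <- (sum_lt_single n (fun i => 4 * z i) v0 Hv0).
  apply sum_lt_ext; intros. unfold piw, ev. destruct (Nat.eqb i v0); ring.
Qed.

Lemma nrm_decomp u : ipp u u = 3 * sum_lt n (fun i => u i * u i) + u v0 * u v0.
Proof.
  unfold ip. rewrite <- (sum_lt_single n (fun i => u i * u i) v0 Hv0), <- sum_lt_scal, <- sum_lt_plus.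
  apply sum_lt_ext; intros. unfold piw. destruct (Nat.eqb i v0); ring.
Qed.

Lemma ipp_w u : ipp u u = sum_lt n (fun i => pw i * (u i * u i)).
Proof. unfold ip. apply sum_lt_ext; intros; ring. Qed.

Lemma top_eig : (0 < n)%nat -> exists u1 lam, ipp u1 u1 = 1 /\
  (forall x, (x < n)%nat -> Aop n AA u1 x = lam * pw x * u1 x) /\
  (forall u, B u u <= lam * ipp u u) /\ 0 <= sum_lt n u1 /\ B u1 u1 = lam.
Proof.
  intros Hn.
  assert (HnR : 0 < INR n) by (apply lt_0_INR; auto).
  destruct (quad_max n AA pw (fun _ => 0)) as [v [Hv1 [_ Hvmax]]].
  { intros i _. pose proof (piw_pos v0 i). lra. }
  { set (c := / sqrt (3 * INR n + 1)).
    assert (Hc : c * c = / (3 * INR n + 1)).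
    { unfold c. rewrite <- Rinv_mult. rewrite sqrt_sqrt. reflexivity. lra. }
    exists (fun _ => c). split.
    - rewrite <- ipp_w. rewrite nrm_decomp, sum_lt_const, Hc. field. lra.
    - rewrite (sum_lt_ext n _ (fun _ => 0)) by (intros; ring). apply sum_lt_const0. }
  set (lam := qf n AA v).
  assert (Hhom := max_homog n AA AAsym pw (fun _ => 0) v ltac:(intros i _; pose proof (piw_pos v0 i); lra) Hvmax).
  assert (Hhom' : forall u, B u u <= lam * ipp u u).
  { intros u. rewrite ipp_w. apply Hhom. rewrite (sum_lt_ext n _ (fun _ => 0)) by (intros; ring). apply sum_lt_const0. }
  assert (Hvv : B v v = lam * sum_lt n (fun i => pw i * (v i * v i))).
  { rewrite Hv1. unfold lam. rewrite qf_Bf. ring. }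
  assert (Hfv := max_eigen n AA AAsym pw (fun _ => 0) v lam Hhom Hvv
                   ltac:(rewrite (sum_lt_ext n _ (fun _ => 0)) by (intros; ring); apply sum_lt_const0)).
  set (r := fun y => Aop n AA v y - lam * pw y * v y).
  specialize (Hfv r ltac:(rewrite (sum_lt_ext n _ (fun _ => 0)) by (intros; ring); apply sum_lt_const0)).
  assert (Hrr : sum_lt n (fun i => r i * r i) = 0).
  { rewrite (Bf_sym n AA AAsym) in Hfv. unfold Bf in Hfv.
    assert (E : sum_lt n (fun i => r i * r i) = sum_lt n (fun x => r x * Aop n AA v x) - lam * sum_lt n (fun i => pw i * (v i * r i))).
    { rewrite <- sum_lt_scal, <- sum_lt_minus. apply sum_lt_ext; intros. unfold r. ring. }
    rewrite E, Hfv. ring. }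
  assert (Hr0 := sum_sq_zero n r Hrr).
  assert (Heig : forall x, (x < n)%nat -> Aop n AA v x = lam * pw x * v x).
  { intros x Hx. specialize (Hr0 x Hx). unfold r in Hr0. lra. }
  assert (Hlam : B v v = lam) by (unfold lam; rewrite qf_Bf; reflexivity).
  destruct (Rle_dec 0 (sum_lt n v)) as [Hs|Hs].
  - exists v, lam. repeat split; auto. rewrite ipp_w; auto.
  - exists (fun i => - v i), lam. repeat split.
    + rewrite ipp_w. rewrite <- Hv1. apply sum_lt_ext; intros; ring.
    + intros x Hx. transitivity (-1 * Aop n AA v x).
      * unfold Aop. rewrite <- sum_lt_scal. apply sum_lt_ext; intros; ring.
      * rewrite Heig; auto. ring.
    + auto.
    + rewrite (sum_lt_ext n _ (fun i => -1 * v i)) by (intros; ring). rewrite sum_lt_scal. lra.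
    + rewrite <- Hlam. rewrite (Bf_ext n AA (fun i => - v i) (fun i => 0 + (-1) * v i) (fun i => - v i) (fun i => 0 + (-1) * v i))
        by (intros; ring).
      assert (Z1 : forall a, B (fun _ => 0) a = 0).
      { intros; unfold Bf; rewrite (sum_lt_ext n _ (fun _ => 0)) by (intros; ring); apply sum_lt_const0. }
      rewrite Bf_linl, !(Bf_linr n AA AAsym), !Z1, !B_zero_r. ring.
Qed.

Lemma Qop_ext a b x : (forall y, (y < n)%nat -> a y = b y) -> Q a x = Q b x.
Proof. intros H; unfold Qop; rewrite (Aop_ext a b); auto. Qed.

Lemma Qop_lin k a b x : Q (fun i => a i + k * b i) x = Q a x + k * Q b x.
Proof. unfold Qop. rewrite (Aop_lin n AA). pose proof (piw_pos v0 x). field. lra. Qed.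

Lemma Qp_ext m a b x : (forall y, (y < n)%nat -> a y = b y) -> (x < n)%nat -> Qp n adj v0 m a x = Qp n adj v0 m b x.
Proof.
  revert x. induction m; intros x H Hx; simpl.
  - auto.
  - apply Qop_ext. intros; apply IHm; auto.
Qed.

Lemma Qp_lin m k a b x : Qp n adj v0 m (fun i => a i + k * b i) x = Qp n adj v0 m a x + k * Qp n adj v0 m b x.
Proof.
  revert x. induction m; intros x; simpl. reflexivity.
  rewrite <- Qop_lin. apply Qop_ext. intros; apply IHm.
Qed.

Lemma Qp_add j k a : Qp n adj v0 (j + k) a = Qp n adj v0 j (Qp n adj v0 k a).
Proof. induction j; simpl; auto. rewrite IHj. reflexivity. Qed.

Lemma Qp_nonneg m a : (forall i, 0 <= a i) -> forall i, 0 <= Qp n adj v0 m a i.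
Proof.
  induction m; intros Ha i; simpl; auto. unfold Qop, Aop. apply Rmult_le_pos.
  - apply sum_lt_nonneg; intros. apply Rmult_le_pos. apply adjR_nonneg. apply IHm; auto.
  - pose proof (piw_pos v0 i). left; apply Rinv_0_lt_compat; lra.
Qed.

Lemma ipp_one_Q z : ipp (fun _ => 1) (Q z) = ipp (fun _ => 1) z - z v0.
Proof.
  rewrite ipp_Q. rewrite (Bf_sym n AA AAsym), B_one_r.
  unfold ip. rewrite <- (sum_lt_single n z v0 Hv0), <- sum_lt_scal, <- sum_lt_minus.
  apply sum_lt_ext; intros. unfold piw. destruct (Nat.eqb i v0); ring.
Qed.

Section U1.
Variables (u1 : nat -> R) (lam : R).
Hypothesis Hn : (0 < n)%nat.
Hypothesis Hu1 : ipp u1 u1 = 1.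
Hypothesis Heig : forall x, (x < n)%nat -> Aop n AA u1 x = lam * pw x * u1 x.
Hypothesis Hmax : forall u, B u u <= lam * ipp u u.
Hypothesis Hsum : 0 <= sum_lt n u1.
Hypothesis Hlam : B u1 u1 = lam.
Hypothesis Hgap : rho < lam.

Lemma lam_ge : 3 * INR n <= lam * (3 * INR n + 1).
Proof.
  specialize (Hmax (fun _ => 1)).
  assert (E1 : ipp (fun _ => 1) (fun _ => 1) = 3 * INR n + 1).
  { rewrite nrm_decomp. rewrite (sum_lt_ext n _ (fun _ => 1)) by (intros; ring). rewrite sum_lt_const; ring. }
  rewrite E1, B_one_r, sum_lt_const in Hmax. lra.
Qed.

Lemma lam_le1 : lam <= 1.
Proof.
  rewrite <- Hlam. eapply Rle_trans. apply B_upper. rewrite <- Hu1, nrm_decomp.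
  assert (0 <= u1 v0 * u1 v0) by apply Rle_0_sqr. lra.
Qed.

Lemma Q_eig x : (x < n)%nat -> Q u1 x = lam * u1 x.
Proof. intros Hx. unfold Qop. rewrite Heig; auto. pose proof (piw_pos v0 x). field. lra. Qed.

Lemma Qp_eig m x : (x < n)%nat -> Qp n adj v0 m u1 x = lam ^ m * u1 x.
Proof.
  revert x. induction m; intros x Hx; simpl. ring.
  rewrite (Qop_ext _ (fun i => 0 + lam ^ m * u1 i)) by (intros; rewrite IHm; auto; ring).
  rewrite Qop_lin. rewrite Q_eig; auto. unfold Qop, Aop.
  rewrite (sum_lt_ext n _ (fun _ => 0)) by (intros; ring). rewrite sum_lt_const0. unfold Rdiv. ring.
Qed.

Lemma B_u1 g : B g u1 = lam * ipp g u1.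
Proof. unfold Bf, ip. rewrite <- sum_lt_scal. apply sum_lt_ext; intros. rewrite Heig; auto. ring. Qed.

Lemma K4 g : ipp g u1 = 0 -> B g g <= rho * ipp g g.
Proof.
  intros Hg. destruct (Rle_dec (B g g) (rho * ipp g g)) as [H|H]; auto. exfalso.
  set (S1 := sum_lt n u1). set (Sg := sum_lt n g).
  destruct (Req_dec Sg 0) as [Hz|Hz].
  - assert (Hb := S1_up g Hz). rewrite nrm_decomp in H.
    assert (0 <= rho * (g v0 * g v0)) by (apply Rmult_le_pos; [lra|apply Rle_0_sqr]).
    apply H. rewrite Rmult_plus_distr_l. lra.
  - set (v := fun i => Sg * u1 i + (- S1) * g i).
    assert (Hv : sum_lt n v = 0).
    { unfold v. rewrite sum_lt_plus, !sum_lt_scal. fold S1 Sg. ring. }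
    assert (Hb := S1_up v Hv).
    assert (Hbu : B u1 g = 0).
    { rewrite (Bf_sym n AA AAsym), B_u1, Hg. ring. }
    assert (Hbv : B v v = Sg * Sg * lam + S1 * S1 * B g g).
    { unfold v. rewrite (Bf_ext n AA _ (fun i => 0 + Sg * u1 i + (-S1) * g i) _ (fun i => 0 + Sg * u1 i + (-S1) * g i))
        by (intros; ring).
      rewrite !Bf_linl, !(Bf_linr n AA AAsym).
      assert (Z1 : forall a, B (fun _ => 0) a = 0).
      { intros; unfold Bf; rewrite (sum_lt_ext n _ (fun _ => 0)) by (intros; ring); apply sum_lt_const0. }
      rewrite !Z1, !B_zero_r, (Bf_sym n AA AAsym g u1), Hbu, Hlam. ring. }
    assert (Hnv : ipp v v = Sg * Sg + S1 * S1 * ipp g g).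
    { unfold v. rewrite (ipp_ext _ (fun i => 0 + Sg * u1 i + (-S1) * g i) _ (fun i => 0 + Sg * u1 i + (-S1) * g i))
        by (intros; ring).
      rewrite !ipp_linl, !ipp_linr.
      assert (Z1 : forall a, ipp (fun _ => 0) a = 0).
      { intros; unfold ip; rewrite (sum_lt_ext n _ (fun _ => 0)) by (intros; ring); apply sum_lt_const0. }
      assert (Z2 : forall a, ipp a (fun _ => 0) = 0).
      { intros; unfold ip; rewrite (sum_lt_ext n _ (fun _ => 0)) by (intros; ring); apply sum_lt_const0. }
      rewrite !Z1, !Z2, (ipp_sym u1 g), Hg, Hu1. ring. }
    assert (Hnv2 : 3 * sum_lt n (fun i => v i * v i) <= ipp v v).
    { rewrite nrm_decomp. assert (0 <= v v0 * v v0) by apply Rle_0_sqr. lra. }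
    assert (0 <= sum_lt n (fun i => v i * v i)) by (apply sum_lt_nonneg; intros; apply Rle_0_sqr).
    assert (Hc : B v v <= rho * ipp v v) by nra.
    rewrite Hbv, Hnv in Hc.
    assert (0 < Sg * Sg) by (apply Rlt_0_sqr; auto).
    assert (0 <= S1 * S1) by apply Rle_0_sqr.
    nra.
Qed.

Lemma K4lo g : - (rho * ipp g g) <= B g g.
Proof.
  assert (H := B_lower g Hn). rewrite nrm_decomp.
  assert (0 <= rho * (g v0 * g v0)) by (apply Rmult_le_pos; [lra|apply Rle_0_sqr]).
  rewrite Rmult_plus_distr_l. lra.
Qed.

Lemma ipp_Q_swap a c : ipp a (Q c) = ipp (Q a) c.
Proof. rewrite ipp_Q, (Bf_sym n AA AAsym), <- ipp_Q, ipp_sym. reflexivity. Qed.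

Lemma K5 g : ipp g u1 = 0 -> ipp (Q g) u1 = 0.
Proof. intros Hg. rewrite ipp_sym, ipp_Q, (Bf_sym n AA AAsym), B_u1, Hg. ring. Qed.

Lemma B_sq k g h : B (fun i => g i + k * h i) (fun i => g i + k * h i) = B g g + 2 * k * B g h + k * k * B h h.
Proof. rewrite Bf_linl, !(Bf_linr n AA AAsym), (Bf_sym n AA AAsym h g). ring. Qed.

Lemma ipp_sq k g h : ipp (fun i => g i + k * h i) (fun i => g i + k * h i) = ipp g g + 2 * k * ipp g h + k * k * ipp h h.
Proof. rewrite ipp_linl, !ipp_linr, (ipp_sym h g). ring. Qed.

Definition rr := rho / (2 - rho).

Lemma rr_bounds : 0 <= rr <= 1.
Proof. unfold rr. split. apply Rmult_le_pos; [lra| left; apply Rinv_0_lt_compat; lra].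
  apply (Rmult_le_reg_r (2 - rho)). lra. unfold Rdiv. rewrite Rmult_assoc, Rinv_l by lra. lra. Qed.

Lemma K6 g : ipp g u1 = 0 -> ipp (Q g) (Q g) <= rr * ipp g g.
Proof.
  intros Hg. set (h := Q g).
  assert (Hh : ipp h u1 = 0) by (apply K5; auto).
  assert (Hp : ipp (fun i => g i + 1 * h i) u1 = 0) by (rewrite ipp_linl, Hg, Hh; ring).
  assert (Hm : ipp (fun i => g i + (-1) * h i) u1 = 0) by (rewrite ipp_linl, Hg, Hh; ring).
  assert (H1 := K4 _ Hp). assert (H2 := K4lo (fun i => g i + (-1) * h i)).
  rewrite B_sq in H1, H2. rewrite ipp_sq in H1, H2.
  assert (Ehh : ipp h h = B g h).
  { unfold h at 2. rewrite ipp_Q, (Bf_sym n AA AAsym). reflexivity. }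
  assert (Hpos : 0 <= ipp g g) by apply ipp_nonneg.
  assert (Hpos2 : 0 <= ipp h h) by apply ipp_nonneg.
  assert (Hk : ipp h h * (4 - 2 * rho) <= 2 * rho * ipp g g) by nra.
  unfold rr. apply (Rmult_le_reg_r (2 - rho)). lra.
  replace (rho / (2 - rho) * ipp g g * (2 - rho)) with (rho * ipp g g) by (field; lra). nra.
Qed.

Lemma Qp_perp m g : ipp g u1 = 0 -> ipp (Qp n adj v0 m g) u1 = 0.
Proof. intros Hg; induction m; simpl; auto. apply K5; auto. Qed.

Lemma Qp_norm m g : ipp g u1 = 0 -> ipp (Qp n adj v0 m g) (Qp n adj v0 m g) <= rr ^ m * ipp g g.
Proof.
  intros Hg; induction m; simpl. lra.
  eapply Rle_trans. apply K6. apply Qp_perp; auto.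
  pose proof rr_bounds. rewrite Rmult_assoc. apply Rmult_le_compat_l; lra.
Qed.

Lemma ipp_shift j k a b : ipp a (Qp n adj v0 (j + k) b) = ipp (Qp n adj v0 j a) (Qp n adj v0 k b).
Proof.
  revert a. induction j; intros a; simpl. reflexivity.
  rewrite ipp_Q_swap, IHj. f_equal.
  transitivity (Qp n adj v0 (j + 1) a). rewrite Qp_add. reflexivity.
  replace (j + 1)%nat with (S j) by lia. reflexivity.
Qed.

Lemma K8 m g : ipp g u1 = 0 -> - (rr ^ (Nat.div2 m) * ipp g g) <= ipp g (Qp n adj v0 m g).
Proof.
  intros Hg. set (k := Nat.div2 m).
  assert (Hn1 := Qp_norm k g Hg).
  assert (Hpos : 0 <= ipp g g) by apply ipp_nonneg.
  assert (0 <= rr ^ k) by (apply pow_le; apply rr_bounds).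
  destruct (Nat.Even_or_Odd m) as [[p Hp]|[p Hp]].
  - assert (Hk : k = p) by (unfold k; subst; rewrite Nat.div2_double; reflexivity).
    replace m with (k + k)%nat by lia. rewrite ipp_shift.
    pose proof (ipp_nonneg (Qp n adj v0 k g)). nra.
  - assert (Hk : k = p) by (unfold k; subst; replace (2 * p + 1)%nat with (S (2 * p)) by lia; rewrite Nat.div2_succ_double; reflexivity).
    replace m with (k + S k)%nat by lia. rewrite ipp_shift. simpl.
    rewrite ipp_Q. assert (H2 := K4lo (Qp n adj v0 k g)).
    pose proof (ipp_nonneg (Qp n adj v0 k g)). nra.
Qed.

Lemma K9 m g g' : ipp g u1 = 0 -> ipp g' u1 = 0 ->
  ipp g' (Qp n adj v0 m g) <= rr ^ (Nat.div2 m) * (ipp g' g' + ipp g g) / 2.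
Proof.
  intros Hg Hg'. set (k := Nat.div2 m).
  assert (Hkm : (k <= m - k)%nat) by (unfold k; pose proof (Nat.div2_odd m); destruct (Nat.odd m); simpl in *; lia).
  replace m with (k + (m - k))%nat by (unfold k; pose proof (Nat.div2_odd m); destruct (Nat.odd m); simpl in *; lia).
  rewrite ipp_shift.
  assert (H1 := ipp_amgm (Qp n adj v0 k g') (Qp n adj v0 (m - k) g)).
  assert (H2 := Qp_norm k g' Hg'). assert (H3 := Qp_norm (m - k) g Hg).
  assert (Hr := rr_bounds).
  assert (H4 : rr ^ (m - k) <= rr ^ k).
  { replace (m - k)%nat with (k + (m - k - k))%nat by lia. rewrite pow_add.
    assert (0 <= rr ^ k) by (apply pow_le; lra). assert (rr ^ (m - k - k) <= 1) by (rewrite <- (pow1 (m - k - k)); apply pow_incr; lra). nra. }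
  assert (0 <= ipp g g) by apply ipp_nonneg.
  assert (0 <= ipp g' g') by apply ipp_nonneg.
  replace (k + (m - k) - k)%nat with (m - k)%nat in * by lia.
  assert (rr ^ (m - k) * ipp g g <= rr ^ k * ipp g g) by nra. lra.
Qed.

Lemma ipp_decomp a b : ipp a b = 3 * sum_lt n (fun i => a i * b i) + a v0 * b v0.
Proof.
  unfold ip. rewrite <- (sum_lt_single n (fun i => a i * b i) v0 Hv0), <- sum_lt_scal, <- sum_lt_plus.
  apply sum_lt_ext; intros. unfold piw. destruct (Nat.eqb i v0); ring.
Qed.

Variable delta : R.
Hypothesis Hdelta : 0 < delta.
Hypothesis Hdl : delta <= lam - rho.

Lemma deplete : let s := sum_lt n u1 / INR n in let kap := / (3 * delta) in
  0 <= u1 v0 /\ u1 v0 <= s /\ 3 * INR n * (s * s) <= 1 /\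
  1 <= (3 * INR n + 3 * (kap * kap) + 1) * ((1 + kap) * (1 + kap)) * (u1 v0 * u1 v0).
Proof.
  intros s kap.
  assert (HnR : 0 < INR n) by (apply lt_0_INR; auto).
  set (w := fun i => u1 i + (- s) * 1).
  assert (Hw : sum_lt n w = 0).
  { unfold w. rewrite sum_lt_plus, sum_lt_scal, sum_lt_const. unfold s. field. lra. }
  set (W := sum_lt n (fun i => w i * w i)).
  assert (HW : 0 <= W) by (apply sum_lt_nonneg; intros; apply Rle_0_sqr).
  assert (HAw : forall x, (x < n)%nat -> Aop n AA w x = lam * pw x * u1 x + (- s) * 3).
  { intros x Hx. unfold w. rewrite (Aop_lin n AA). rewrite Heig, Aop_const by auto. ring. }
  assert (HBw : B w w = lam * ipp w u1).
  { unfold Bf. rewrite (sum_lt_ext n _ (fun x => lam * (pw x * w x * u1 x) + (- s * 3) * w x)).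
    - rewrite sum_lt_plus, !sum_lt_scal, Hw. unfold ip. ring.
    - intros x Hx. rewrite HAw; auto. ring. }
  assert (Hwu : sum_lt n (fun i => w i * u1 i) = W).
  { unfold W. transitivity (sum_lt n (fun i => w i * w i + s * w i)).
    - apply sum_lt_ext; intros; unfold w; ring.
    - rewrite sum_lt_plus, sum_lt_scal, Hw. ring. }
  rewrite ipp_decomp, Hwu in HBw.
  assert (HS := S1_up w Hw). fold W in HS.
  set (a := u1 v0). set (b := w v0).
  assert (Hab : b = a - s) by (unfold b, a, w; ring).
  assert (Hb2 : b * b <= W).
  { unfold W, b. apply (sum_lt_term n (fun i => w i * w i)); auto. intros; apply Rle_0_sqr. }
  fold a b in HBw.
  assert (Hlam0 : 0 < lam) by lra.
  assert (Hl1 := lam_le1).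
  assert (Hstar : 3 * delta * W + lam * (b * a) <= 0).
  { assert (delta * W <= (lam - rho) * W) by (apply Rmult_le_compat_r; lra). nra. }
  assert (Hab0 : b * a <= 0).
  { assert (0 <= delta * W) by (apply Rmult_le_pos; lra).
    destruct (Rle_dec (b * a) 0); auto. exfalso. assert (0 < lam * (b * a)) by (apply Rmult_lt_0_compat; lra). lra. }
  assert (H3 : 3 * delta * W <= - (b * a)).
  { assert (- (b * a) * lam <= - (b * a) * 1) by (apply Rmult_le_compat_l; lra). nra. }
  assert (H9 : 9 * (delta * delta) * W <= a * a).
  { destruct (Req_dec W 0) as [Z|Z]. rewrite Z. assert (0 <= a * a) by apply Rle_0_sqr. lra.
    assert (HWp : 0 < W) by lra.
    assert (Hsq : (3 * delta * W) * (3 * delta * W) <= (b * a) * (b * a)).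
    { assert (0 <= 3 * delta * W) by (apply Rmult_le_pos; lra). nra. }
    assert ((b * a) * (b * a) <= W * (a * a)).
    { replace ((b * a) * (b * a)) with ((b * b) * (a * a)) by ring. apply Rmult_le_compat_r. apply Rle_0_sqr. auto. }
    apply (Rmult_le_reg_l W); auto. nra. }
  assert (Hs0 : 0 <= s).
  { unfold s. apply Rmult_le_pos; auto. left; apply Rinv_0_lt_compat; auto. }
  assert (Ha0 : 0 <= a).
  { destruct (Rle_dec 0 a); auto. exfalso. assert (0 <= b) by nra. lra. }
  assert (Has : a <= s).
  { destruct (Req_dec a 0) as [Z|Z]. lra. assert (b <= 0) by nra. lra. }
  assert (Hk : kap * (3 * delta) = 1) by (unfold kap; field; lra).
  assert (Hkp : 0 < kap) by (unfold kap; apply Rinv_0_lt_compat; lra).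
  assert (Hbk : - b <= kap * a).
  { assert (Hbb : b * b <= (kap * a) * (kap * a)).
    { replace ((kap * a) * (kap * a)) with ((kap * kap) * (a * a)) by ring.
      assert (W <= (kap * kap) * (a * a)).
      { replace W with ((kap * 3 * delta) * (kap * 3 * delta) * W) by (rewrite <- Rmult_assoc in Hk; rewrite Hk; ring).
        assert (0 <= kap * kap) by apply Rle_0_sqr. nra. }
      lra. }
    assert (0 <= kap * a) by (apply Rmult_le_pos; lra). nra. }
  assert (Hsk : s <= (1 + kap) * a) by lra.
  assert (Hn1 : 1 = 3 * W + 3 * INR n * (s * s) + a * a).
  { rewrite <- Hu1, nrm_decomp. fold a.
    assert (Hsq : sum_lt n (fun i => u1 i * u1 i) = W + INR n * (s * s)).
    { unfold W. rewrite <- sum_lt_const, <- sum_lt_plus. transitivity (sum_lt n (fun i => w i * w i + 2 * s * w i + s * s)).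
      - apply sum_lt_ext; intros; unfold w; ring.
      - rewrite !sum_lt_plus, sum_lt_scal, Hw. ring. }
    rewrite Hsq. ring. }
  assert (HW2 : W <= kap * kap * (a * a)).
  { replace W with ((kap * 3 * delta) * (kap * 3 * delta) * W) by (rewrite <- Rmult_assoc in Hk; rewrite Hk; ring).
    assert (0 <= kap * kap) by apply Rle_0_sqr. nra. }
  split; [auto|split; [auto|split]].
  - nra.
  - assert (Haa : a * a <= s * s) by nra.
    assert (Hss : s * s <= (1 + kap) * (1 + kap) * (a * a)) by nra.
    assert (1 <= (3 * INR n + 3 * (kap * kap) + 1) * (s * s)).
    { assert (kap * kap * (a * a) <= kap * kap * (s * s)) by (apply Rmult_le_compat_l; [apply Rle_0_sqr|auto]). nra. }
    assert (0 <= 3 * INR n + 3 * (kap * kap) + 1) by (assert (0 <= kap*kap) by apply Rle_0_sqr; lra).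
    nra.
Qed.

Lemma ipp_ev_ev : ipp (ev v0) (ev v0) = 4.
Proof. rewrite ipp_ev. unfold ev. rewrite Nat.eqb_refl. ring. Qed.

Lemma decomp_ev m x : (x < n)%nat ->
  Qp n adj v0 m (ev v0) x = Qp n adj v0 m (fun i => ev v0 i + (- ipp (ev v0) u1) * u1 i) x + ipp (ev v0) u1 * (lam ^ m * u1 x).
Proof.
  intros Hx. rewrite <- Qp_eig by auto. rewrite <- Qp_lin. apply Qp_ext; auto. intros; ring.
Qed.

Lemma a_lower m : 4 * (u1 v0 * u1 v0) * lam ^ m - rr ^ (Nat.div2 m) <= Qp n adj v0 m (ev v0) v0.
Proof.
  set (al := ipp (ev v0) u1).
  assert (Hal : al = 4 * u1 v0) by (unfold al; apply ipp_ev).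
  set (g := fun i => ev v0 i + (- al) * u1 i).
  assert (Hg : ipp g u1 = 0) by (unfold g; rewrite ipp_linl, Hu1; fold al; ring).
  assert (Hgg : ipp g g <= 4).
  { unfold g. rewrite ipp_sq, Hu1, ipp_ev_ev. fold al. assert (0 <= al * al) by apply Rle_0_sqr. nra. }
  assert (E : 4 * Qp n adj v0 m (ev v0) v0 = ipp g (Qp n adj v0 m g) + al * al * lam ^ m).
  { rewrite <- ipp_ev.
    rewrite (ipp_ext (ev v0) (fun i => g i + al * u1 i) _ (fun i => Qp n adj v0 m g i + (al * lam ^ m) * u1 i)).
    - rewrite ipp_linl, !ipp_linr, Hg, Hu1.
      rewrite (ipp_sym u1), Qp_perp by auto. ring.
    - intros; unfold g; ring.
    - intros i Hi. unfold g. rewrite decomp_ev by auto. fold al. ring. }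
  assert (H := K8 m g Hg). assert (0 <= rr ^ Nat.div2 m) by (apply pow_le; apply rr_bounds).
  assert (rr ^ Nat.div2 m * ipp g g <= rr ^ Nat.div2 m * 4) by (apply Rmult_le_compat_l; auto).
  rewrite Hal in E. nra.
Qed.

Lemma A_upper m : ipp (fun _ => 1) (Qp n adj v0 m (ev v0)) <= 8 * lam ^ m + rr ^ (Nat.div2 m) * (3 * INR n + 5) / 2.
Proof.
  destruct deplete as [Ha0 [Has [H3n _]]].
  set (s := sum_lt n u1 / INR n) in *.
  assert (HnR : 0 < INR n) by (apply lt_0_INR; auto).
  set (al := ipp (ev v0) u1).
  assert (Hal : al = 4 * u1 v0) by (unfold al; apply ipp_ev).
  set (g := fun i => ev v0 i + (- al) * u1 i).
  assert (Hg : ipp g u1 = 0) by (unfold g; rewrite ipp_linl, Hu1; fold al; ring).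
  assert (Hgg : ipp g g <= 4).
  { unfold g. rewrite ipp_sq, Hu1, ipp_ev_ev. fold al. assert (0 <= al * al) by apply Rle_0_sqr. nra. }
  set (be := ipp (fun _ => 1) u1).
  set (g' := fun i => 1 + (- be) * u1 i).
  assert (Hg' : ipp g' u1 = 0) by (unfold g'; rewrite ipp_linl, Hu1; fold be; ring).
  assert (Hone : ipp (fun _ => 1) (fun _ => 1) = 3 * INR n + 1).
  { rewrite nrm_decomp. rewrite (sum_lt_ext n _ (fun _ => 1)) by (intros; ring). rewrite sum_lt_const; ring. }
  assert (Hgg' : ipp g' g' <= 3 * INR n + 1).
  { unfold g'. rewrite ipp_sq, Hu1, Hone. fold be. assert (0 <= be * be) by apply Rle_0_sqr. nra. }
  assert (E : ipp (fun _ => 1) (Qp n adj v0 m (ev v0)) = ipp g' (Qp n adj v0 m g) + al * be * lam ^ m).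
  { rewrite (ipp_ext (fun _ => 1) (fun i => g' i + be * u1 i) _ (fun i => Qp n adj v0 m g i + (al * lam ^ m) * u1 i)).
    - rewrite ipp_linl, !ipp_linr, Hg', Hu1.
      rewrite (ipp_sym u1), Qp_perp by auto. ring.
    - intros; unfold g'; ring.
    - intros i Hi. unfold g. rewrite decomp_ev by auto. fold al. ring. }
  assert (Hbe : be = 3 * (INR n * s) + u1 v0).
  { unfold be. rewrite ipp_decomp. rewrite (sum_lt_ext n _ u1) by (intros; ring). unfold s. field. lra. }
  assert (Halbe : al * be <= 8).
  { rewrite Hal, Hbe.
    assert (Hs1 : s * s <= 1).
    { assert (1 <= INR n) by (apply (le_INR 1); lia). nra. }
    assert (u1 v0 * (3 * (INR n * s) + u1 v0) <= s * (3 * (INR n * s) + s)).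
    { assert (0 <= INR n * s) by (apply Rmult_le_pos; lra). nra. }
    nra. }
  assert (H9 := K9 m g g' Hg Hg').
  assert (0 <= rr ^ Nat.div2 m) by (apply pow_le; apply rr_bounds).
  assert (0 <= lam ^ m) by (apply pow_le; lra).
  assert (rr ^ Nat.div2 m * (ipp g' g' + ipp g g) <= rr ^ Nat.div2 m * (3 * INR n + 5)) by (apply Rmult_le_compat_l; lra).
  rewrite E.
  assert (al * be * lam ^ m <= 8 * lam ^ m) by (apply Rmult_le_compat_r; lra).
  unfold Rdiv in *. lra.
Qed.

End U1.
Lemma H_main delta : (0 < n)%nat -> 0 < delta -> (delta + rho) * (3 * INR n + 1) <= 3 * INR n ->
  exists lam, 3 * INR n <= lam * (3 * INR n + 1) /\ lam <= 1 /\ forall m,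
    4 / ((3 * INR n + 3 * (/(3 * delta) * /(3 * delta)) + 1) * ((1 + /(3 * delta)) * (1 + /(3 * delta)))) * lam ^ m
      - rr ^ (Nat.div2 m) <= Qp n adj v0 m (ev v0) v0 /\
    ipp (fun _ => 1) (Qp n adj v0 m (ev v0)) <= 8 * lam ^ m + rr ^ (Nat.div2 m) * (3 * INR n + 5) / 2.
Proof.
  intros Hn Hd Hgap.
  destruct (top_eig Hn) as [u1 [lam [Hu1 [Heig [Hmax [Hsum Hlam]]]]]].
  assert (HnR : 0 < INR n) by (apply lt_0_INR; auto).
  assert (Hge := lam_ge lam Hmax).
  assert (Hdl : delta <= lam - rho).
  { apply (Rmult_le_reg_r (3 * INR n + 1)). lra. nra. }
  assert (Hgap' : rho < lam) by lra.
  exists lam. split; auto. split. apply (lam_le1 u1 lam Hu1 Hlam).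
  intros m. split.
  - destruct (deplete u1 lam Hn Hu1 Heig Hsum Hlam Hgap' delta Hd Hdl) as [_ [_ [_ Hdep]]].
    eapply Rle_trans; [|apply (a_lower u1 lam Hn Hu1 Heig Hmax Hlam Hgap')].
    set (D := (3 * INR n + 3 * (/ (3 * delta) * / (3 * delta)) + 1) * ((1 + / (3 * delta)) * (1 + / (3 * delta)))) in *.
    assert (HD : 0 < D) by (assert (0 < 3 * delta) by lra; assert (0 < /(3*delta)) by (apply Rinv_0_lt_compat; lra);
      unfold D; apply Rmult_lt_0_compat; nra).
    assert (0 <= lam ^ m) by (apply pow_le; lra).
    assert (4 / D <= 4 * (u1 v0 * u1 v0)).
    { apply (Rmult_le_reg_r D); auto. unfold Rdiv. rewrite Rmult_assoc, Rinv_l by lra. nra. }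
    assert (4 / D * lam ^ m <= 4 * (u1 v0 * u1 v0) * lam ^ m) by (apply Rmult_le_compat_r; auto). lra.
  - apply (A_upper u1 lam Hn Hu1 Heig Hsum Hlam Hgap' delta Hd Hdl).
Qed.

Lemma ipp_one_Qp m : ipp (fun _ => 1) (Qp n adj v0 m (ev v0)) = 4 - sum_lt m (fun j => Qp n adj v0 j (ev v0) v0).
Proof.
  induction m.
  - simpl. rewrite ipp_sym, ipp_ev. unfold ev. rewrite sum_lt_0. ring.
  - simpl. rewrite ipp_one_Q, IHm, sum_lt_S. ring.
Qed.

Lemma ipp_one_ge m : 4 * Qp n adj v0 m (ev v0) v0 <= ipp (fun _ => 1) (Qp n adj v0 m (ev v0)).
Proof.
  assert (Hnn : forall i, 0 <= Qp n adj v0 m (ev v0) i).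
  { apply Qp_nonneg. intros; unfold ev; destruct (Nat.eqb i v0); lra. }
  rewrite ipp_decomp. assert (1 * Qp n adj v0 m (ev v0) v0 <= sum_lt n (fun i => 1 * Qp n adj v0 m (ev v0) i)).
  { apply (sum_lt_term n (fun i => 1 * Qp n adj v0 m (ev v0) i)); auto. intros. specialize (Hnn i). lra. }
  lra.
Qed.

End G.

Lemma rsum_const1 (A : Type) (l : list A) : rsum (map (fun _ => 1) l) = INR (length l).
Proof. induction l; simpl. reflexivity. unfold rsum in *; simpl. rewrite IHl. destruct (length l); simpl; ring. Qed.

Lemma cubic_deg n adj : cubic_graph n adj -> forall i, (i < n)%nat -> sum_lt n (fun j => adjR adj i j) = 3.
Proof.
  intros [_ [_ H]] i Hi. specialize (H i Hi). unfold nbrsH in H.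
  unfold adjR. rewrite <- (rsum_filter (adj i) (fun _ => 1) n). rewrite rsum_const1, H. simpl. ring.
Qed.

Lemma sum_lt_shift m f : sum_lt (S m) f = f 0%nat + sum_lt m (fun s => f (S s)).
Proof.
  induction m. rewrite sum_lt_S, !sum_lt_0. ring.
  rewrite sum_lt_S, IHm, (sum_lt_S m). ring.
Qed.

Lemma rsum_seq1 k f : rsum (map f (seq 1 k)) = sum_lt k (fun j => f (S j)).
Proof. unfold sum_lt. rewrite <- seq_shift, map_map. reflexivity. Qed.

Section W.
Variables (n : nat) (adj : nat -> nat -> bool) (v0 : nat).
Hypothesis Hv0 : (v0 < n)%nat.
Hypothesis Hdeg : forall i, (i < n)%nat -> sum_lt n (fun j => adjR adj i j) = 3.

Notation fh := (first_hit n adj v0).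

Lemma deg_Hv x : (x < n)%nat -> degG n adj v0 (Hv x) = piw v0 x.
Proof.
  intros Hx. unfold degG. simpl. rewrite app_length, map_length.
  assert (H3 : INR (length (nbrsH n adj x)) = 3).
  { unfold nbrsH. rewrite <- rsum_const1, rsum_filter. rewrite <- (Hdeg x Hx). apply sum_lt_ext; intros.
    unfold adjR. destruct (adj x i); reflexivity. }
  rewrite plus_INR, H3. unfold piw. destruct (Nat.eqb x v0); simpl; ring.
Qed.

Lemma fh_Hv s x : (x < n)%nat ->
  fh (S s) (Hv x) = / piw v0 x * (Aop n (adjR adj) (fun y => fh s (Hv y)) x +
                        (if Nat.eqb x v0 then (match s with O => 1 | S _ => 0 end) else 0)).
Proof.
  intros Hx. cbn [first_hit]. rewrite deg_Hv by auto. cbn [nbrsG].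
  rewrite map_app, rsum_app, map_map. unfold nbrsH. rewrite rsum_filter.
  rewrite Rmult_plus_distr_l. f_equal.
  - unfold Aop. rewrite <- sum_lt_scal. apply sum_lt_ext; intros. unfold adjR. destruct (adj x i); ring.
  - destruct (Nat.eqb x v0); unfold rsum; simpl; ring.
Qed.

Lemma fh_H s x : (x < n)%nat -> fh (S s) (Hv x) = Qp n adj v0 s (ev v0) x / 4.
Proof.
  revert x. induction s; intros x Hx.
  - rewrite fh_Hv by auto. simpl. unfold Aop.
    rewrite (sum_lt_ext n _ (fun _ => 0)) by (intros; simpl; ring). rewrite sum_lt_const0.
    unfold ev, piw. destruct (Nat.eqb_spec x v0); simpl; field.
  - rewrite fh_Hv by auto. simpl. unfold Qop.
    rewrite (Aop_ext n adj _ (fun y => Qp n adj v0 s (ev v0) y / 4)) by (intros; apply IHs; auto).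
    destruct (Nat.eqb x v0).
    + unfold Aop. rewrite (sum_lt_ext n _ (fun y => / 4 * (adjR adj x y * Qp n adj v0 s (ev v0) y))) by (intros; unfold Rdiv; ring).
      rewrite sum_lt_scal. pose proof (piw_pos v0 x). field. lra.
    + unfold Aop. rewrite (sum_lt_ext n _ (fun y => / 4 * (adjR adj x y * Qp n adj v0 s (ev v0) y))) by (intros; unfold Rdiv; ring).
      rewrite sum_lt_scal. pose proof (piw_pos v0 x). field. lra.
Qed.

Definition hh (s k : nat) : R := match k with O => if Nat.eqb s 0 then 1 else 0 | _ => fh s (Lv k) end.

Lemma fh_Lv s k : fh (S s) (Lv (S k)) = / 2 * hh s k + / 2 * fh s (Lv (S (S k))).
Proof.
  cbn [first_hit]. unfold degG. cbn [nbrsG length]. replace (INR 2) with 2 by (simpl; ring).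
  unfold rsum. cbn [map fold_right]. destruct k.
  - unfold hh. destruct s; cbn [Nat.eqb]; ring.
  - unfold hh. ring.
Qed.

Lemma hh_S s k : hh (S s) (S k) = (hh s k + hh s (S (S k))) / 2.
Proof. change (hh (S s) (S k)) with (fh (S s) (Lv (S k))). rewrite fh_Lv. unfold hh at 3. field. Qed.

Lemma hh_0 k : hh 0 (S k) = 0.
Proof. reflexivity. Qed.

Definition Wf (m k : nat) : R := 1 - sum_lt (S m) (fun s => hh s k).

Lemma Wf_0k k : Wf 0 (S k) = 1.
Proof. unfold Wf. rewrite sum_lt_S, sum_lt_0, hh_0. ring. Qed.

Lemma Wf_m0 m : Wf m 0 = 0.
Proof. unfold Wf. rewrite sum_lt_shift. rewrite (sum_lt_ext m (fun s => hh (S s) 0) (fun _ => 0)) by (intros; reflexivity).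
  rewrite sum_lt_const0. unfold hh. simpl. ring. Qed.

Lemma Wf_S m k : Wf (S m) (S k) = (Wf m k + Wf m (S (S k))) / 2.
Proof.
  unfold Wf. rewrite (sum_lt_shift (S m)), hh_0.
  rewrite (sum_lt_ext (S m) _ (fun s => (hh s k + hh s (S (S k))) / 2)) by (intros; apply hh_S).
  unfold Rdiv. rewrite sum_lt_scalr, sum_lt_plus. field.
Qed.

Lemma ret_eq_SS m : ret_eq n adj v0 (S (S m)) = hh (S m) 1 / 2 + Qp n adj v0 m (ev v0) v0 / 8.
Proof.
  unfold ret_eq.
  change (fh (S (S m)) (Lv 0)) with (rsum (map (fun y => / degG n adj v0 (Lv 0) *
     match y with Lv 0 => match S m with O => 1 | S _ => 0 end | _ => fh (S m) y end) [Lv 1; Hv v0])).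
  unfold degG. cbn [nbrsG length]. replace (INR 2) with 2 by (simpl; ring).
  unfold rsum. cbn [map fold_right]. rewrite fh_H by auto. unfold hh. field.
Qed.

Lemma ret_eq_1 : ret_eq n adj v0 1 = 0.
Proof. unfold ret_eq. cbn [first_hit]. unfold rsum. simpl. ring. Qed.

Hypothesis Hsym : forall i j, (i < n)%nat -> (j < n)%nat -> adj i j = adj j i.

Lemma ret_ge_SS m : ret_ge n adj v0 (S (S m)) = Wf m 1 / 2 + ip n v0 (fun _ => 1) (Qp n adj v0 m (ev v0)) / 8.
Proof.
  unfold ret_ge. replace (S (S m) - 1)%nat with (S m) by lia. rewrite rsum_seq1, sum_lt_shift, ret_eq_1.
  rewrite (sum_lt_ext m _ (fun j => hh (S j) 1 / 2 + Qp n adj v0 j (ev v0) v0 / 8)) by (intros; apply ret_eq_SS).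
  rewrite (ipp_one_Qp n adj v0 (1/2) Hsym Hdeg Hv0 ltac:(lra) m).
  unfold Wf. rewrite sum_lt_shift, hh_0. unfold Rdiv. rewrite sum_lt_plus, !sum_lt_scalr. field.
Qed.

End W.

Lemma sum_lt_shift' m f : sum_lt (S m) f = f 0%nat + sum_lt m (fun s => f (S s)).
Proof.
  induction m. rewrite sum_lt_S, !sum_lt_0. ring.
  rewrite sum_lt_S, IHm, (sum_lt_S m). ring.
Qed.

Fixpoint Vf (L m k : nat) : R :=
  match m with
  | O => if andb (Nat.ltb 0 k) (Nat.ltb k L) then 1 else 0
  | S m' => if andb (Nat.ltb 0 k) (Nat.ltb k L) then (Vf L m' (pred k) + Vf L m' (S k)) / 2 else 0
  end.

Section Half.
Variable L : nat.
Hypothesis HL : (1 <= L)%nat.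

Lemma V_bounds m k : 0 <= Vf L m k <= 1.
Proof.
  revert k; induction m; intros k; simpl; destruct (andb _ _); try lra.
  pose proof (IHm (pred k)); pose proof (IHm (S k)); lra.
Qed.

Lemma V_out m k : (k = 0 \/ L <= k)%nat -> Vf L m k = 0.
Proof.
  intros H. destruct m; simpl; destruct (Nat.ltb_spec 0 k); destruct (Nat.ltb_spec k L); simpl; auto; lia.
Qed.

Lemma V_mono m k : Vf L (S m) k <= Vf L m k.
Proof.
  revert k; induction m; intros k.
  - simpl. destruct (andb _ _). pose proof (V_bounds 0 (pred k)); pose proof (V_bounds 0 (S k)); simpl in *; lra. lra.
  - change (Vf L (S (S m)) k) with (if andb (Nat.ltb 0 k) (Nat.ltb k L) then (Vf L (S m) (pred k) + Vf L (S m) (S k)) / 2 else 0).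
    change (Vf L (S m) k) with (if andb (Nat.ltb 0 k) (Nat.ltb k L) then (Vf L m (pred k) + Vf L m (S k)) / 2 else 0).
    destruct (andb _ _). pose proof (IHm (pred k)); pose proof (IHm (S k)); lra. lra.
Qed.

Lemma V_mono' s m k : (s <= m)%nat -> Vf L m k <= Vf L s k.
Proof.
  intros H. induction H. lra. pose proof (V_mono m k). lra.
Qed.

Lemma V_sum m k : (k <= L)%nat -> sum_lt m (fun s => Vf L s k) <= INR k * (INR L - INR k).
Proof.
  revert k; induction m; intros k Hk.
  - rewrite sum_lt_0. assert (INR k <= INR L) by (apply le_INR; auto). pose proof (pos_INR k). nra.
  - rewrite sum_lt_shift'.
    destruct (Nat.eq_dec k 0) as [E|E].
    + subst. rewrite (sum_lt_ext m _ (fun _ => 0)) by (intros; apply V_out; auto).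
      rewrite sum_lt_const0, V_out by auto. simpl. lra.
    + destruct (Nat.eq_dec k L) as [E2|E2].
      * subst. rewrite (sum_lt_ext m _ (fun _ => 0)) by (intros; apply V_out; lia).
        rewrite sum_lt_const0, V_out by lia. lra.
      * assert (Hin : andb (Nat.ltb 0 k) (Nat.ltb k L) = true).
        { destruct (Nat.ltb_spec 0 k); destruct (Nat.ltb_spec k L); simpl; auto; lia. }
        simpl (Vf L 0 k). rewrite Hin.
        rewrite (sum_lt_ext m (fun s => Vf L (S s) k) (fun s => (Vf L s (pred k) + Vf L s (S k)) / 2))
          by (intros; simpl; rewrite Hin; reflexivity).
        unfold Rdiv. rewrite sum_lt_scalr, sum_lt_plus.
        assert (H1 := IHm (pred k) ltac:(lia)). assert (H2 := IHm (S k) ltac:(lia)).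
        rewrite S_INR in H2. replace (INR (pred k)) with (INR k - 1) in H1 by (destruct k; [lia|rewrite S_INR; simpl; ring]).
        nra.
Qed.

Lemma V_m1 m : INR m * Vf L m 1 <= INR L.
Proof.
  assert (H : sum_lt m (fun s => Vf L s 1) <= INR L).
  { eapply Rle_trans. apply V_sum. lia. simpl. pose proof (pos_INR L). lra. }
  assert (H2 : sum_lt m (fun _ => Vf L m 1) <= sum_lt m (fun s => Vf L s 1)).
  { apply sum_lt_le; intros. apply V_mono'. lia. }
  rewrite sum_lt_const in H2. lra.
Qed.

Definition psi m k := Rmin 1 (Vf L m k + INR k / INR L).

Variable W : nat -> nat -> R.
Hypothesis HW0 : forall m, W m 0 = 0.
Hypothesis HW1 : forall k, W 0 (S k) = 1.
Hypothesis HWS : forall m k, W (S m) (S k) = (W m k + W m (S (S k))) / 2.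

Lemma W_nonneg m k : 0 <= W m k.
Proof.
  revert k; induction m; intros k; destruct k.
  - rewrite HW0; lra.
  - rewrite HW1; lra.
  - rewrite HW0; lra.
  - rewrite HWS. pose proof (IHm k); pose proof (IHm (S (S k))); lra.
Qed.

Lemma W_le1 m k : W m k <= 1.
Proof.
  revert k; induction m; intros k; destruct k.
  - rewrite HW0; lra.
  - rewrite HW1; lra.
  - rewrite HW0; lra.
  - rewrite HWS. pose proof (IHm k); pose proof (IHm (S (S k))); lra.
Qed.

Lemma W_psi m k : W m k <= psi m k.
Proof.
  assert (HLp : 0 < INR L) by (apply lt_0_INR; lia).
  revert k; induction m; intros k.
  - unfold psi. destruct k.
    + rewrite HW0. rewrite V_out by auto. simpl. unfold Rdiv. rewrite Rmult_0_l, Rplus_0_l.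
      unfold Rmin; destruct (Rle_dec 1 0); lra.
    + rewrite HW1. apply Rmin_glb. lra.
      simpl (Vf L 0 (S k)). destruct (Nat.ltb_spec (S k) L); cbn [andb Nat.ltb Nat.leb].
      * pose proof (pos_INR (S k)). assert (0 <= INR (S k) / INR L) by (apply Rmult_le_pos; [lra|left; apply Rinv_0_lt_compat; lra]). lra.
      * assert (INR L <= INR (S k)) by (apply le_INR; lia).
        assert (1 <= INR (S k) / INR L). { apply (Rmult_le_reg_r (INR L)); auto. unfold Rdiv. rewrite Rmult_assoc, Rinv_l by lra. lra. }
        lra.
  - unfold psi. destruct k.
    + rewrite HW0. rewrite V_out by auto. simpl. unfold Rdiv. rewrite Rmult_0_l, Rplus_0_l.
      unfold Rmin; destruct (Rle_dec 1 0); lra.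
    + rewrite HWS. pose proof (IHm k) as H1. pose proof (IHm (S (S k))) as H2. unfold psi in H1, H2.
      apply Rmin_glb.
      * pose proof (W_le1 m k); pose proof (W_le1 m (S (S k))); lra.
      * pose proof (Rmin_r 1 (Vf L m k + INR k / INR L)). pose proof (Rmin_r 1 (Vf L m (S (S k)) + INR (S (S k)) / INR L)).
        simpl (Vf L (S m) (S k)). destruct (Nat.ltb_spec (S k) L); cbn [andb Nat.ltb Nat.leb pred].
        -- rewrite !S_INR in *. unfold Rdiv in *. lra.
        -- assert (INR L <= INR (S k)) by (apply le_INR; lia).
           assert (1 <= INR (S k) / INR L). { apply (Rmult_le_reg_r (INR L)); auto. unfold Rdiv. rewrite Rmult_assoc, Rinv_l by lra. lra. }
           pose proof (W_le1 m k); pose proof (W_le1 m (S (S k))); lra.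
Qed.

Lemma W_bound m : (1 <= m)%nat -> W m 1 <= INR L / INR m + 1 / INR L.
Proof.
  intros Hm. assert (HLp : 0 < INR L) by (apply lt_0_INR; lia).
  assert (Hmp : 0 < INR m) by (apply lt_0_INR; lia).
  assert (H1 := W_psi m 1). unfold psi in H1. pose proof (Rmin_r 1 (Vf L m 1 + INR 1 / INR L)).
  assert (H2 := V_m1 m). assert (Vf L m 1 <= INR L / INR m).
  { apply (Rmult_le_reg_l (INR m)); auto. replace (INR m * (INR L / INR m)) with (INR L) by (field; lra). lra. }
  simpl INR in *. lra.
Qed.

End Half.

Lemma nat_above r : exists N : nat, r <= INR N.
Proof.
  destruct (archimed r) as [H1 _].
  destruct (Z_lt_le_dec (up r) 0) as [Hz|Hz].
  - exists 0%nat. simpl. apply IZR_lt in Hz. lra.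
  - exists (Z.to_nat (up r)). rewrite INR_IZR_INZ, Z2Nat.id by lia. lra.
Qed.

Lemma exp_le a b : a <= b -> exp a <= exp b.
Proof. intros H. destruct (Rle_lt_or_eq_dec a b H) as [H'|H']. left; apply exp_increasing; auto. subst; lra. Qed.

Lemma exp_mul_nat m z : exp (INR m * z) = exp z ^ m.
Proof.
  induction m. simpl. rewrite Rmult_0_l, exp_0. reflexivity.
  rewrite S_INR, Rmult_plus_distr_r, Rmult_1_l, exp_plus, IHm. simpl. ring.
Qed.

Lemma one_minus_ge x : 0 <= x <= 1/2 -> exp (-2 * x) <= 1 - x.
Proof.
  intros H. replace (-2 * x) with (- (2 * x)) by ring. rewrite exp_Ropp.
  assert (H1 := exp_ineq1_le (2 * x)). assert (Hp := exp_pos (2 * x)).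
  apply (Rmult_le_reg_l (exp (2 * x))); auto. rewrite Rinv_r by lra. nra.
Qed.

Lemma pow_bern q j : 1 <= q -> 1 + INR j * (q - 1) <= q ^ j.
Proof.
  intros Hq. induction j. simpl. lra.
  rewrite S_INR. simpl. assert (1 <= q ^ j) by (apply pow_R1_Rle; auto).
  assert (0 <= INR j) by apply pos_INR. nra.
Qed.

Lemma exp_sq y : 0 <= y -> (y / 2) * (y / 2) <= exp y.
Proof.
  intros Hy. replace y with (y / 2 + y / 2) at 3 by field. rewrite exp_plus.
  assert (H := exp_ineq1_le (y / 2)). nra.
Qed.

Lemma ln_ge t Y : 0 < t -> exp Y <= t -> Y <= ln t.
Proof.
  intros Ht H. destruct (Rle_dec Y (ln t)) as [H'|H']; auto. exfalso.
  assert (exp (ln t) < exp Y) by (apply exp_increasing; lra). rewrite exp_ln in H0; auto. lra.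
Qed.

Lemma combine_ratio (c1 X E W a Ap hh nR : R) :
  0 <= hh -> 0 <= W -> W <= X -> c1 * X - E <= a -> Ap <= 8 * X + E * (3 * nR + 5) / 2 -> 4 * a <= Ap ->
  E * (3 * nR + 5) / 16 <= X / 2 -> E <= c1 * X / 2 -> 0 < c1 -> 0 < X ->
  (hh / 2 + a / 8) / (W / 2 + Ap / 8) >= c1 / 32.
Proof.
  intros. assert (Hden : 0 < W / 2 + Ap / 8).
  { assert (0 < c1 * X) by (apply Rmult_lt_0_compat; auto). lra. }
  assert (Hden2 : W / 2 + Ap / 8 <= 2 * X) by lra.
  assert (Hnum : c1 * X / 16 <= hh / 2 + a / 8) by lra.
  apply Rle_ge. apply (Rmult_le_reg_r (W / 2 + Ap / 8)); auto.
  replace ((hh / 2 + a / 8) / (W / 2 + Ap / 8) * (W / 2 + Ap / 8)) with (hh / 2 + a / 8) by (field; lra).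
  assert (0 <= c1) by lra. assert (c1 / 32 * (W / 2 + Ap / 8) <= c1 / 32 * (2 * X)) by (apply Rmult_le_compat_l; lra).
  lra.
Qed.

Lemma fh_nonneg n adj v0 s x : 0 <= first_hit n adj v0 s x.
Proof.
  revert x. induction s; intros x. simpl; lra.
  cbn [first_hit]. generalize (nbrsG n adj v0 x). intros l.
  assert (Hd : 0 <= / degG n adj v0 x).
  { unfold degG. destruct (length (nbrsG n adj v0 x)). simpl. rewrite Rinv_0. lra.
    left. apply Rinv_0_lt_compat. apply lt_0_INR. lia. }
  induction l as [|y l IH]; unfold rsum; simpl. lra.
  unfold rsum in IH. apply Rplus_le_le_0_compat; auto. apply Rmult_le_pos; auto.
  destruct y as [[|k]|i]; try apply IHs. destruct s; lra.
Qed.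

Lemma aux_u (u L : R) : 6 <= u -> 0 <= L -> (L + 1) * (L + 1) > u ^ 6 / 2 -> 2 * u <= L.
Proof.
  intros Hu HL H. destruct (Rle_dec (2 * u) L) as [H'|H']; auto. exfalso.
  assert (H1 : L + 1 < 3 * u) by lra.
  assert (H2 : (L + 1) * (L + 1) < (3 * u) * (3 * u)) by (apply Rmult_le_0_lt_compat; lra).
  assert (H3 : 36 <= u * u) by nra.
  assert (H4 : u ^ 6 = (u * u) * (u * u) * (u * u)) by ring.
  assert (H5 : 36 * 36 * (u * u) <= (u * u) * (u * u) * (u * u)).
  { assert (36 * 36 <= (u * u) * (u * u)) by nra. assert (0 <= u * u) by nra. nra. }
  lra.
Qed.

Lemma aux_u6 u : 6 <= u -> u <= u ^ 6.
Proof. intros H. assert (1 <= u ^ 5) by (apply pow_R1_Rle; lra). simpl in *. nra. Qed.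

Lemma pos_mul4 a b c d : 0 < a -> 0 < b -> 0 < c -> 0 < d -> 0 < a * b * c * d.
Proof. intros. repeat apply Rmult_lt_0_compat; auto. Qed.

Theorem theorem4p1 (rho : R) (hrho : rho < 1) :
  exists K c : R, 0 < K /\ 0 < c /\
  exists T : nat, forall (t n : nat) (adj : nat -> nat -> bool) (v0 : nat),
    (T <= t)%nat ->
    K * INR t / ln (INR t) <= INR n <= K * INR t / ln (INR t) + 2 ->
    cubic_graph n adj ->
    nontrivial_spectrum_bound n adj rho ->
    (v0 < n)%nat ->
    ret_eq n adj v0 t / ret_ge n adj v0 t >= c * ln (INR t) / INR t.
Proof.
  set (rp := Rmax rho (1/2)).
  assert (Hrp : 1/2 <= rp < 1).
  { split. apply Rmax_r. apply Rmax_lub_lt; lra. }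
  set (dl := (1 - rp) / 2).
  assert (Hdl : 0 < dl <= 1/4) by (unfold dl; lra).
  set (kap := / (3 * dl)).
  assert (Hkap : 0 < kap) by (unfold kap; apply Rinv_0_lt_compat; lra).
  set (kk := (1 + kap) * (1 + kap)).
  assert (Hkk : 1 <= kk) by (unfold kk; nra).
  set (q := (2 - rp) / rp).
  assert (Hq : 1 < q).
  { unfold q. apply (Rmult_lt_reg_r rp). lra. unfold Rdiv. rewrite Rmult_assoc, Rinv_l by lra. lra. }
  assert (Hqr : rr rp = / q).
  { unfold rr, q. field. lra. }
  set (Y := / dl + 3 * (kap * kap) + 30).
  assert (HY : 30 <= Y /\ / dl <= Y /\ 3 * (kap * kap) + 1 <= Y).
  { assert (0 < / dl) by (apply Rinv_0_lt_compat; lra). assert (0 <= kap * kap) by apply Rle_0_sqr.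
    unfold Y; lra. }
  assert (Hq1 : 0 < (q - 1) ^ 3) by (apply pow_lt; lra).
  set (T2 := 3456 * kk / ((q - 1) ^ 3) + 14).
  assert (HT2 : 14 <= T2 /\ 3456 * kk <= (T2 - 14) * (q - 1) ^ 3).
  { unfold T2. split. assert (0 <= 3456 * kk / (q - 1) ^ 3) by (apply Rmult_le_pos; [lra|left; apply Rinv_0_lt_compat; lra]). lra.
    right. field. lra. }
  destruct (nat_above (exp Y + T2)) as [T HT].
  exists 4, (/ (256 * kk)). split. lra. split. apply Rinv_0_lt_compat; lra.
  exists T. intros t n adj v0 Ht Hn Hcub Hspec Hv0.
  set (tR := INR t) in *.
  assert (HtR : exp Y + T2 <= tR) by (eapply Rle_trans; [apply HT| apply le_INR; auto]).
  assert (HeY := exp_pos Y).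
  assert (HtR0 : 0 < tR) by lra.
  set (y := ln tR) in *.
  assert (Hy : Y <= y) by (apply ln_ge; lra).
  assert (Hte : exp y = tR) by (apply exp_ln; auto).
  assert (Hy30 : 30 <= y) by lra.
  assert (Hsq : (y / 2) * (y / 2) <= tR) by (rewrite <- Hte; apply exp_sq; lra).
  set (nR := INR n) in *.
  assert (H4 : y <= 4 * tR / y).
  { apply (Rmult_le_reg_r y). lra. replace (4 * tR / y * y) with (4 * tR) by (field; lra). nra. }
  assert (HnL : y <= nR) by lra.
  assert (HnU : nR <= 8 * tR / y).
  { assert (4 * tR / y + 2 <= 8 * tR / y).
    { replace (8 * tR / y) with (4 * tR / y + 4 * tR / y) by (field; lra). lra. }
    lra. }
  assert (HnT : nR <= tR).
  { eapply Rle_trans. apply HnU. apply (Rmult_le_reg_r y). lra.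
    replace (8 * tR / y * y) with (8 * tR) by (field; lra). nra. }
  assert (Hn0 : (0 < n)%nat) by (apply INR_lt; simpl; fold nR; lra).
  assert (Hspec' : nontrivial_spectrum_bound n adj rp).
  { intros lam v Hnz Hs He. eapply Rle_trans. apply (Hspec lam v Hnz Hs He). apply Rmax_l. }
  assert (Hsym : forall i j, (i < n)%nat -> (j < n)%nat -> adj i j = adj j i) by apply Hcub.
  assert (Hdeg := cubic_deg n adj Hcub).
  assert (Hgap : (dl + rp) * (3 * INR n + 1) <= 3 * INR n).
  { fold nR. assert (Hnd : 1 <= nR * dl).
    { assert (/ dl <= nR) by lra. apply (Rmult_le_compat_r dl) in H; [|lra]. rewrite Rinv_l in H by lra. lra. }
    replace (dl + rp) with (1 - dl) by (unfold dl; field). nra. }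
  destruct (H_main n adj v0 rp Hsym Hdeg Hv0 Hrp Hspec' dl Hn0 (proj1 Hdl) Hgap) as [lam [Hlam1 [Hlam2 Hbounds]]].
  fold nR in Hlam1, Hbounds.
  assert (Ht14 : (14 <= t)%nat).
  { apply INR_le. simpl. fold tR. lra. }
  destruct t as [|[|m]]; try lia.
  assert (HmR : INR m = tR - 2) by (unfold tR; rewrite !S_INR; ring).
  rewrite (ret_eq_SS n adj v0 Hv0 Hdeg m), (ret_ge_SS n adj v0 Hv0 Hdeg Hsym m).
  destruct (Hbounds m) as [Ha HA].
  set (X := lam ^ m) in *.
  set (E := rr rp ^ Nat.div2 m) in *.
  set (D := (3 * nR + 3 * (/ (3 * dl) * / (3 * dl)) + 1) * ((1 + / (3 * dl)) * (1 + / (3 * dl)))) in *.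
  set (c1 := 4 / D) in *.
  assert (HD : D <= 4 * nR * kk).
  { unfold D. fold kap. fold kk. apply Rmult_le_compat_r; lra. }
  assert (HD0 : 0 < D) by (unfold D; fold kap; fold kk; apply Rmult_lt_0_compat; nra).
  assert (Hc1 : 0 < c1) by (unfold c1; apply Rmult_lt_0_compat; [lra|apply Rinv_0_lt_compat; lra]).
  assert (Hc1n : / (nR * kk) <= c1).
  { unfold c1. apply (Rmult_le_reg_r D); auto. replace (4 / D * D) with 4 by (field; lra).
    apply (Rmult_le_reg_l (nR * kk)). nra. rewrite <- Rmult_assoc, Rinv_r by nra. nra. }
  set (u := exp (y / 6)).
  assert (Hu6 : u ^ 6 = tR) by (unfold u; rewrite <- exp_mul_nat; rewrite <- Hte; f_equal; simpl; field).
  assert (Hu : 6 <= u) by (unfold u; pose proof (exp_ineq1_le (y / 6)); lra).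
  assert (HX : / u <= X).
  { assert (Hx : 0 <= / (3 * nR + 1) <= 1/2).
    { split. left; apply Rinv_0_lt_compat; lra. apply (Rmult_le_reg_r (3 * nR + 1)). lra.
      rewrite Rinv_l by lra. lra. }
    assert (Hl : 1 - / (3 * nR + 1) <= lam).
    { apply (Rmult_le_reg_r (3 * nR + 1)). lra.
      replace ((1 - / (3 * nR + 1)) * (3 * nR + 1)) with (3 * nR) by (field; lra). lra. }
    assert (H1 : (1 - / (3 * nR + 1)) ^ m <= X).
    { unfold X. apply pow_incr. lra. }
    assert (H2 : exp (-2 * / (3 * nR + 1)) ^ m <= (1 - / (3 * nR + 1)) ^ m).
    { apply pow_incr. split. left; apply exp_pos. apply one_minus_ge; auto. }
    rewrite <- exp_mul_nat in H2.
    assert (H3 : - (y / 6) <= INR m * (-2 * / (3 * nR + 1))).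
    { rewrite HmR.
      assert (Hi : / (3 * nR + 1) <= y / (12 * tR)).
      { apply (Rmult_le_reg_r (3 * nR + 1)). lra. rewrite Rinv_l by lra.
        apply (Rmult_le_reg_r (12 * tR)). lra.
        replace (y / (12 * tR) * (3 * nR + 1) * (12 * tR)) with (y * (3 * nR + 1)) by (field; lra).
        assert (4 * tR <= y * nR).
        { apply (Rmult_le_reg_r (/ y)). apply Rinv_0_lt_compat; lra.
          replace (y * nR * / y) with nR by (field; lra). unfold Rdiv in Hn. lra. }
        nra. }
      assert (0 <= / (3 * nR + 1)) by lra.
      assert (Hq2 : (tR - 2) * / (3 * nR + 1) <= tR * (y / (12 * tR))) by nra.
      replace (tR * (y / (12 * tR))) with (y / 12) in Hq2 by (field; lra).
      replace ((tR - 2) * (-2 * / (3 * nR + 1))) with (-2 * ((tR - 2) * / (3 * nR + 1))) by ring. lra. }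
    assert (H4' : exp (- (y / 6)) <= exp (INR m * (-2 * / (3 * nR + 1)))) by (apply exp_le; auto).
    rewrite exp_Ropp in H4'. fold u in H4'. lra. }
  assert (HX0 : 0 < X) by (assert (0 < / u) by (apply Rinv_0_lt_compat; lra); lra).
  set (L := Nat.sqrt m).
  assert (HLs := Nat.sqrt_spec m (Nat.le_0_l m)). fold L in HLs.
  assert (HmL : (1 <= m)%nat) by lia.
  assert (HL1 : (1 <= L)%nat).
  { destruct L. simpl in HLs. lia. lia. }
  assert (HLR : 2 * u <= INR L).
  { apply aux_u; auto. apply pos_INR.
    assert (Hlt : INR (S L * S L) > tR / 2).
    { apply Rlt_gt. apply Rle_lt_trans with (INR m). lra. apply lt_INR. lia. }
    rewrite mult_INR, S_INR in Hlt. rewrite Hu6. exact Hlt. }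
  assert (HW : Wf n adj v0 m 1 <= X).
  { assert (Hb := W_bound L HL1 (Wf n adj v0) (Wf_m0 n adj v0) (Wf_0k n adj v0) (Wf_S n adj v0) m HmL).
    assert (HL0 : 0 < INR L) by lra.
    assert (INR L / INR m <= 1 / INR L).
    { apply (Rmult_le_reg_r (INR m * INR L)). apply Rmult_lt_0_compat; [apply lt_0_INR; lia|lra].
      replace (INR L / INR m * (INR m * INR L)) with (INR L * INR L) by (field; apply not_0_INR; lia).
      replace (1 / INR L * (INR m * INR L)) with (INR m) by (field; lra).
      rewrite <- mult_INR. apply le_INR. lia. }
    assert (2 / INR L <= / u).
    { apply (Rmult_le_reg_r (INR L * u)). nra. replace (2 / INR L * (INR L * u)) with (2 * u) by (field; lra).
      replace (/ u * (INR L * u)) with (INR L) by (field; lra). lra. }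
    lra. }
  assert (HE : E <= X / (2 * kk * nR)).
  { set (k := Nat.div2 m) in *.
    assert (Hk : (m <= 2 * k + 1)%nat) by (unfold k; pose proof (Nat.div2_odd m); destruct (Nat.odd m); simpl in *; lia).
    set (j := (k / 3)%nat).
    assert (Hj : (k <= 3 * j + 2 /\ 3 * j <= k)%nat) by (unfold j; pose proof (Nat.div_mod k 3 ltac:(lia)); pose proof (Nat.mod_upper_bound k 3 ltac:(lia)); lia).
    clearbody j.
    assert (HjR : tR / 12 <= INR j).
    { assert (INR m <= 6 * INR j + 5). { replace 6 with (INR 6) by (simpl; ring). replace 5 with (INR 5) by (simpl; ring).
        rewrite <- mult_INR, <- plus_INR. apply le_INR. lia. }
      lra. }
    assert (Hqk : q ^ (3 * j) <= q ^ k).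
    { replace k with (3 * j + (k - 3 * j))%nat by lia. rewrite pow_add.
      assert (1 <= q ^ (k - 3 * j)) by (apply pow_R1_Rle; lra). assert (0 <= q ^ (3 * j)) by (apply pow_le; lra). nra. }
    rewrite Nat.mul_comm, pow_mult in Hqk.
    assert (Hb := pow_bern q j ltac:(lra)).
    assert (Hqj : tR / 12 * (q - 1) <= q ^ j).
    { assert (tR / 12 * (q - 1) <= INR j * (q - 1)) by (apply Rmult_le_compat_r; lra). lra. }
    assert (Hcube : (tR / 12 * (q - 1)) ^ 3 <= (q ^ j) ^ 3) by (apply pow_incr; split; [apply Rmult_le_pos; lra|auto]).
    assert (Hbig : 2 * kk * tR * tR <= q ^ k).
    { eapply Rle_trans; [|apply Hqk]. eapply Rle_trans; [|apply Hcube].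
      replace ((tR / 12 * (q - 1)) ^ 3) with (tR * tR * (tR * (q - 1) ^ 3) / 1728) by (simpl; field).
      assert (3456 * kk <= tR * (q - 1) ^ 3) by nra.
      assert (0 <= tR * tR) by nra. nra. }
    unfold E. rewrite Hqr. rewrite pow_inv.
    assert (Hqk0 : 0 < q ^ k) by (apply pow_lt; lra).
    assert (Hp1 : 0 < 2 * kk * tR * tR) by (apply pos_mul4; lra).
    assert (/ (q ^ k) <= / (2 * kk * tR * tR)) by (apply Rinv_le_contravar; auto).
    assert (/ (2 * kk * tR * tR) <= X / (2 * kk * nR)).
    { assert (/ tR <= X).
      { eapply Rle_trans; [|apply HX]. apply Rinv_le_contravar. lra. rewrite <- Hu6. apply aux_u6; auto. }
      assert (Hp2 : 0 < 2 * kk * tR * nR) by (apply pos_mul4; lra).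
      apply (Rmult_le_reg_r (2 * kk * tR * nR)). auto.
      replace (/ (2 * kk * tR * tR) * (2 * kk * tR * nR)) with (nR / tR) by (field; lra).
      replace (X / (2 * kk * nR) * (2 * kk * tR * nR)) with (X * tR) by (field; lra).
      apply (Rmult_le_reg_r tR). lra. replace (nR / tR * tR) with nR by (field; lra).
      assert (/ tR * tR <= X * tR) by (apply Rmult_le_compat_r; lra).
      rewrite Rinv_l in H1 by lra.
      assert (nR * 1 <= nR * tR). { apply Rmult_le_compat_l; lra. }
      assert (X * tR * tR >= 1 * tR) by (apply Rle_ge, Rmult_le_compat_r; lra).
      lra. }
    lra. }
  assert (HE0 : 0 <= E) by (unfold E; apply pow_le; pose proof (rr_bounds rp Hrp); lra).
  assert (HnR0 : 0 < nR) by lra.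
  assert (Hkk0 : 0 < kk) by lra.
  assert (Hkn : 0 < 2 * kk * nR) by (apply Rmult_lt_0_compat; lra).
  assert (Hc1nk : 1 <= c1 * (nR * kk)).
  { apply (Rmult_le_compat_r (nR * kk)) in Hc1n. rewrite Rinv_l in Hc1n. lra.
    apply Rgt_not_eq, Rmult_lt_0_compat; lra. left; apply Rmult_lt_0_compat; lra. }
  assert (Hcomb : (hh n adj v0 (S m) 1 / 2 + Qp n adj v0 m (ev v0) v0 / 8) /
    (Wf n adj v0 m 1 / 2 + ip n v0 (fun _ => 1) (Qp n adj v0 m (ev v0)) / 8) >= c1 / 32).
  { apply (combine_ratio c1 X E _ _ _ _ nR).
    - apply fh_nonneg.
    - apply (W_nonneg (Wf n adj v0) (Wf_m0 n adj v0) (Wf_0k n adj v0) (Wf_S n adj v0)).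
    - auto.
    - auto.
    - auto.
    - apply ipp_one_ge; auto.
    - assert (E * (3 * nR + 5) <= X / (2 * kk * nR) * (3 * nR + 5)) by (apply Rmult_le_compat_r; lra).
      assert (X / (2 * kk * nR) * (3 * nR + 5) <= 8 * X).
      { apply (Rmult_le_reg_r (2 * kk * nR)). auto.
        replace (X / (2 * kk * nR) * (3 * nR + 5) * (2 * kk * nR)) with (X * (3 * nR + 5)) by (field; lra).
        replace (8 * X * (2 * kk * nR)) with (X * (16 * kk * nR)) by ring.
        apply Rmult_le_compat_l. lra. assert (nR <= kk * nR) by (rewrite <- (Rmult_1_l nR) at 1; apply Rmult_le_compat_r; lra). lra. }
      lra.
    - assert (X / (2 * kk * nR) <= c1 * X / 2).
      { apply (Rmult_le_reg_r (2 * kk * nR)). auto.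
        replace (X / (2 * kk * nR) * (2 * kk * nR)) with X by (field; lra).
        replace (c1 * X / 2 * (2 * kk * nR)) with (X * (c1 * (nR * kk))) by field.
        rewrite <- (Rmult_1_r X) at 1. apply Rmult_le_compat_l; lra. }
      lra.
    - auto.
    - auto. }
  eapply Rge_trans. apply Hcomb. apply Rle_ge.
  assert (Hp3 : 0 < 256 * kk * tR) by (apply Rmult_lt_0_compat; lra).
  apply (Rmult_le_reg_r (256 * kk * tR)). auto.
  replace (/ (256 * kk) * y / tR * (256 * kk * tR)) with y by (field; lra).
  replace (c1 / 32 * (256 * kk * tR)) with (8 * (c1 * kk * tR)) by field.
  assert (Hyn : y * nR <= 8 * tR).
  { apply (Rmult_le_reg_r (/ y)). apply Rinv_0_lt_compat; lra.
    replace (y * nR * / y) with nR by (field; lra). unfold Rdiv in HnU. lra. }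
  assert (Hy1 : y * 1 <= y * (c1 * (nR * kk))) by (apply Rmult_le_compat_l; lra).
  assert (Hck : 0 <= c1 * kk) by (apply Rmult_le_pos; lra).
  assert (Hy2 : (c1 * kk) * (y * nR) <= (c1 * kk) * (8 * tR)) by (apply Rmult_le_compat_l; auto).
  replace (y * (c1 * (nR * kk))) with ((c1 * kk) * (y * nR)) in Hy1 by ring.
  replace (8 * (c1 * kk * tR)) with ((c1 * kk) * (8 * tR)) by ring.
  lra.
Qed.
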